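(* Let $u$ and $v$ be two prime words such that $u<_{lex}v$, and let $\alpha$ be an ordinal such that $u^\alpha v<_{lex}v$. Then the word $u^\alpha v^\beta$ is prime for every ordinal $\beta\ge1$.
   Context: $A$ is a finite alphabet with a linear order $<_A$. Words are sequences of letters indexed by countable ordinals, $x^\alpha$ is the concatenation of $\alpha$ copies of $x$. A suffix of $x$ is $x[\gamma,|x|)$, proper if $0<\gamma<|x|$. Write $x<_{str}x'$ if there are letters $a<_Ab$ and words $y,z,z'$ with $x=yaz$, $x'=ybz'$; $x\le_{lex}x'$ iff $x$ is a prefix of $x'$ or $x<_{str}x'$; $<_{lex}$ is its strict version. A word is primitive if $x=y^\alpha$ implies $\alpha=1$ and $y=x$; $w$ is prime if it is primitive and every proper suffix $z$ satisfies $w\le_{lex}z$. *)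

(* Defs.v *)
(* Transfinite words are modelled as labelled countable well-orders;
   equality of words is label-preserving order isomorphism. *)
From mathcomp Require Import all_boot all_order.
Import Order.TTheory.



Unset Printing Implicit Defensive.

(* A raw linear order: carrier, strict order, and an encoding into nat
   (witnessing countability once shown injective). *)
Record lorder := LOrder {
  car : Type;
  ord : car -> car -> Prop;
  enc : car -> nat }.

Definition is_ord (O : lorder) : Prop :=
  (forall p q, enc O p = enc O q -> p = q) /\
  (forall p, ~ ord O p p) /\
  (forall p q r, ord O p q -> ord O q r -> ord O p r) /\
  (forall p q, ord O p q \/ p = q \/ ord O q p) /\
  well_founded (ord O).

Section Words.
Variable d : Order.disp_t.
Variable A : finOrderType d.

Record word := Word { wo : lorder; lab : car wo -> A }.

Definition is_word (x : word) : Prop := is_ord (wo x).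

Definition word_eq (x y : word) : Prop :=
  exists (f : car (wo x) -> car (wo y)) (g : car (wo y) -> car (wo x)),
    (forall p, g (f p) = p) /\ (forall q, f (g q) = q) /\
    (forall p q, ord (wo x) p q <-> ord (wo y) (f p) (f q)) /\
    (forall p, lab y (f p) = lab x p).

Definition letter (a : A) : word :=
  @Word (@LOrder unit (fun _ _ => False) (fun _ => 0%N)) (fun _ => a).

Definition cat_ord (x y : lorder) : car x + car y -> car x + car y -> Prop :=
  fun s t => match s, t with
  | inl p, inl q => ord x p q
  | inr p, inr q => ord y p q
  | inl _, inr _ => True
  | inr _, inl _ => False
  end.

Definition cat_enc (x y : lorder) (s : car x + car y) : nat :=
  match s with inl p => (2 * enc x p)%N | inr q => (2 * enc y q).+1 end.

Definition wcat (x y : word) : word :=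
  @Word (@LOrder (car (wo x) + car (wo y)) (@cat_ord (wo x) (wo y))
                 (@cat_enc (wo x) (wo y)))
        (fun s => match s with inl p => lab x p | inr q => lab y q end).

(* Power x^alpha: concatenation of alpha copies of x; position (i, p) is
   position p of the i-th copy (lexicographic order, copy index major). *)
Definition pow_ord (x a : lorder) : car a * car x -> car a * car x -> Prop :=
  fun s t => ord a s.1 t.1 \/ (s.1 = t.1 /\ ord x s.2 t.2).

Definition wpow (x : word) (alpha : lorder) : word :=
  @Word (@LOrder (car alpha * car (wo x)) (@pow_ord (wo x) alpha)
                 (fun s => (2 ^ enc alpha s.1 * (2 * enc (wo x) s.2).+1)%N))
        (fun s => lab x s.2).

Definition suffix (x : word) (gamma : car (wo x)) : word :=
  let T := {t : car (wo x) | t = gamma \/ ord (wo x) gamma t} in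
  @Word (@LOrder T (fun s t => ord (wo x) (proj1_sig s) (proj1_sig t))
                   (fun s => enc (wo x) (proj1_sig s)))
        (fun s => lab x (proj1_sig s)).

(* gamma is a proper suffix index: 0 < gamma (< |x| holds automatically). *)
Definition proper_pos (x : word) (gamma : car (wo x)) : Prop :=
  exists t, ord (wo x) t gamma.

(* x is a prefix of x': x' = x z for some word z, i.e. x is
   isomorphic to an initial segment of x'. *)
Definition wprefix (x x' : word) : Prop :=
  exists f : car (wo x) -> car (wo x'),
    (forall p q, ord (wo x) p q <-> ord (wo x') (f p) (f q)) /\
    (forall p, lab x' (f p) = lab x p) /\
    (forall p q', ord (wo x') q' (f p) -> exists q, f q = q').

Definition str_lt (x x' : word) : Prop :=
  exists (y : word) (a b : A) (z z' : word),
    (a < b)%O /\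
    word_eq x (wcat y (wcat (letter a) z)) /\
    word_eq x' (wcat y (wcat (letter b) z')).

Definition lex_le (x x' : word) : Prop := wprefix x x' \/ str_lt x x'.
Definition lex_lt (x x' : word) : Prop := lex_le x x' /\ ~ word_eq x x'.

Definition is_one (alpha : lorder) : Prop :=
  exists t : car alpha, forall s, s = t.

Definition primitive (x : word) : Prop :=
  forall (y : word) (alpha : lorder), is_word y -> is_ord alpha ->
    word_eq x (wpow y alpha) -> is_one alpha /\ word_eq y x.

Definition prime_word (w : word) : Prop :=
  primitive w /\
  forall gamma : car (wo w), proper_pos w gamma -> lex_le w (suffix w gamma).

End Words.

Arguments word {d} A.
Arguments Word {d A}.
Arguments wo {d A}.
Arguments lab {d A}.
Arguments is_word {d A}.
Arguments word_eq {d A}.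
Arguments letter {d A}.
Arguments wcat {d A}.
Arguments wpow {d A}.
Arguments suffix {d A}.
Arguments proper_pos {d A}.
Arguments wprefix {d A}.
Arguments str_lt {d A}.
Arguments lex_le {d A}.
Arguments lex_lt {d A}.
Arguments primitive {d A}.
Arguments prime_word {d A}.

(* Main.v *)
Require Import Defs.
From mathcomp Require Import all_boot all_order.
From Stdlib Require Import Classical ClassicalEpsilon ProofIrrelevance Wellfounded.
Import Order.TTheory.
Import Defs.
Set Bullet Behavior "Strict Subproofs".

Section W.
Context {d : Order.disp_t} {A : finOrderType d}.
Implicit Types x y z : word A.

Definition WO (O : lorder) := (forall p, ~ ord O p p) /\
  (forall p q r, ord O p q -> ord O q r -> ord O p r) /\
  (forall p q, ord O p q \/ p = q \/ ord O q p) /\ well_founded (ord O).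

Lemma is_ord_WO {O} : is_ord O -> WO O.
Proof. unfold is_ord, WO; tauto. Qed.

Lemma wo_irr {O} : WO O -> forall {p}, ~ ord O p p. Proof. unfold WO; tauto. Qed.
Lemma wo_trans {O} : WO O -> forall {p q r}, ord O p q -> ord O q r -> ord O p r.
Proof. unfold WO; intros [_ [H _]]; exact H. Qed.
Lemma wo_tot {O} : WO O -> forall p q, ord O p q \/ p = q \/ ord O q p.
Proof. unfold WO; intros [_ [_ [H _]]]; exact H. Qed.
Lemma wo_wf {O} : WO O -> well_founded (ord O).
Proof. unfold WO; tauto. Qed.
Lemma wo_asym {O} : WO O -> forall {p q}, ord O p q -> ~ ord O q p.
Proof. intros H p q H1 H2. exact (wo_irr H (wo_trans H H1 H2)). Qed.
Lemma wo_neq {O} : WO O -> forall {p q}, ord O p q -> p <> q.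
Proof. intros H p q H1 E; subst; exact (wo_irr H H1). Qed.

Ltac irr_tac := match goal with H : ord ?O ?a ?a |- _ =>
  exfalso; apply (@wo_irr O ltac:(assumption) a H) end.

Lemma A_irr {a : A} : ~ (a < a)%O.
Proof. rewrite ltxx; discriminate. Qed.
Lemma A_trans (a b c : A) : (a < b)%O -> (b < c)%O -> (a < c)%O.
Proof. intros; eapply lt_trans; eauto. Qed.
Lemma A_tot (a b : A) : a = b \/ (a < b)%O \/ (b < a)%O.
Proof. case: (ltgtP a b); auto. Qed.

Lemma choice_fun {X Y : Type} {P : X -> Y -> Prop} :
  (forall a, exists b, P a b) -> exists g, forall a, P a (g a).
Proof.
  intro H. exists (fun a => proj1_sig (constructive_indefinite_description _ (H a))).
  intro a; exact (proj2_sig (constructive_indefinite_description _ (H a))).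
Qed.

Definition emb x y (D : car (wo x) -> Prop) (f : car (wo x) -> car (wo y)) : Prop :=
  (forall p q, D p -> D q -> (ord (wo x) p q <-> ord (wo y) (f p) (f q))) /\
  (forall p, D p -> lab y (f p) = lab x p) /\
  (forall p q', D p -> ord (wo y) q' (f p) -> exists p', D p' /\ f p' = q').

Definition pre x y := exists f, emb x y (fun _ => True) f.

Lemma wprefix_pre x y : wprefix x y <-> pre x y.
Proof.
  unfold wprefix, pre, emb; split.
  - intros [f [H1 [H2 H3]]]; exists f; split; [|split]; auto.
    intros p q' _ H; destruct (H3 p q' H) as [q Hq]; eauto.
  - intros [f [H1 [H2 H3]]]; exists f; split; [|split]; auto.
    intros p q' H; destruct (H3 p q' I H) as [q [_ Hq]]; eauto.
Qed.

Definition agree x y p q (f : car (wo x) -> car (wo y)) : Prop :=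
  (forall s t, ord (wo x) s p -> ord (wo x) t p ->
     (ord (wo x) s t <-> ord (wo y) (f s) (f t))) /\
  (forall s, ord (wo x) s p -> lab y (f s) = lab x s) /\
  (forall s, ord (wo x) s p -> ord (wo y) (f s) q) /\
  (forall t, ord (wo y) t q -> exists s, ord (wo x) s p /\ f s = t).

Definition strp x y := exists p q f, agree x y p q f /\ (lab x p < lab y q)%O.

Lemma agree_emb {x y p q f} : WO (wo y) -> agree x y p q f ->
  emb x y (fun s => ord (wo x) s p) f.
Proof.
  intros Wy [H1 [H2 [H3 H4]]]; split; [|split]; auto.
  intros s q' Hs Hq. apply H4. eapply wo_trans; eauto.
Qed.

Lemma wf_min {O} (P : car O -> Prop) : WO O -> (exists t, P t) ->
  exists t, P t /\ forall s, P s -> ~ ord O s t.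
Proof.
  intros W [t Ht]. apply NNPP; intro N.
  assert (forall t, ~ P t) as K.
  { intro t0. induction t0 as [t0 IH] using (well_founded_ind (wo_wf W)).
    intro Pt. apply N. exists t0; split; auto. intros s Ps Hs. exact (IH s Hs Ps). }
  exact (K t Ht).
Qed.

Lemma selfemb {O} (f : car O -> car O) : WO O ->
  (forall p q, ord O p q -> ord O (f p) (f q)) -> forall p, ~ ord O (f p) p.
Proof.
  intros W Hf p Hp.
  destruct (wf_min (fun p => ord O (f p) p) W (ex_intro (fun p => ord O (f p) p) p Hp)) as [p0 [H0 Hm]].
  apply (Hm (f p0)); auto.
Qed.

Lemma emb_inj {x y D f} : WO (wo x) -> WO (wo y) -> emb x y D f ->
  forall {p q}, D p -> D q -> f p = f q -> p = q.
Proof.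
  intros Wx Wy [H1 _] p q Dp Dq E.
  destruct (wo_tot Wx p q) as [H|[H|H]]; auto.
  - apply (H1 p q Dp Dq) in H; rewrite E in H; destruct (wo_irr Wy H).
  - apply (H1 q p Dq Dp) in H; rewrite E in H; destruct (wo_irr Wy H).
Qed.

Lemma emb_uniq {x y D f g} : WO (wo x) -> WO (wo y) -> emb x y D f -> emb x y D g ->
  forall p, D p -> f p = g p.
Proof.
  intros Wx Wy Ef Eg p.
  induction p as [p IH] using (well_founded_ind (wo_wf Wx)). intro Dp.
  destruct Ef as [F1 [F2 F3]]. destruct Eg as [G1 [G2 G3]].
  destruct (wo_tot Wy (f p) (g p)) as [H|[H|H]]; auto.
  - destruct (G3 p (f p) Dp H) as [p' [Dp' E]].
    assert (ord (wo x) p' p) as Hp. { apply (G1 p' p Dp' Dp). rewrite E; auto. }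
    pose proof (IH p' Hp Dp') as E2. rewrite E in E2.
    apply (F1 p' p Dp' Dp) in Hp. rewrite E2 in Hp. destruct (wo_irr Wy Hp).
  - destruct (F3 p (g p) Dp H) as [p' [Dp' E]].
    assert (ord (wo x) p' p) as Hp. { apply (F1 p' p Dp' Dp). rewrite E; auto. }
    pose proof (IH p' Hp Dp') as E2. rewrite E in E2.
    apply (G1 p' p Dp' Dp) in Hp. rewrite <- E2 in Hp. destruct (wo_irr Wy Hp).
Qed.

Lemma emb_restr {x y D D' f} : emb x y D f -> (forall p, D' p -> D p) ->
  (forall p t, D' p -> D t -> ord (wo x) t p -> D' t) -> emb x y D' f.
Proof.
  intros [H1 [H2 H3]] S C; split; [|split].
  - intros; apply H1; auto.
  - intros; apply H2; auto.
  - intros p q' Dp Hq. destruct (H3 p q' (S p Dp) Hq) as [p' [Dp' E]].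
    exists p'; split; auto. apply (C p p' Dp Dp'). apply (H1 p' p Dp' (S p Dp)).
    rewrite E; auto.
Qed.

Lemma emb_comp {x y z D E f g} : emb x y D f -> emb y z E g ->
  (forall p, D p -> E (f p)) -> emb x z D (fun p => g (f p)).
Proof.
  intros [F1 [F2 F3]] [G1 [G2 G3]] DE; split; [|split].
  - intros p q Dp Dq. rewrite (F1 p q Dp Dq). apply G1; auto.
  - intros p Dp. rewrite G2; auto.
  - intros p r Dp Hr. destruct (G3 (f p) r (DE p Dp) Hr) as [q [Eq Hq]].
    assert (ord (wo y) q (f p)) as H. { apply (G1 q (f p) Eq (DE p Dp)). rewrite Hq; auto. }
    destruct (F3 p q Dp H) as [p' [Dp' E']]. exists p'; split; auto. rewrite E'; auto.
Qed.


Lemma mono_iff {x y} (D : car (wo x) -> Prop) (f : car (wo x) -> car (wo y)) :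
  WO (wo x) -> WO (wo y) ->
  (forall p q, D p -> D q -> ord (wo x) p q -> ord (wo y) (f p) (f q)) ->
  forall p q, D p -> D q -> (ord (wo x) p q <-> ord (wo y) (f p) (f q)).
Proof.
  intros Wx Wy M p q Dp Dq; split; [apply M; auto|intro H].
  destruct (wo_tot Wx p q) as [H1|[H1|H1]]; auto.
  - subst; destruct (wo_irr Wy H).
  - destruct (wo_asym Wy H (M q p Dq Dp H1)).
Qed.

Lemma agree_sym {x y p q f} : WO (wo x) -> WO (wo y) -> agree x y p q f ->
  exists g, agree y x q p g.
Proof.
  intros Wx Wy Ag. pose proof (agree_emb Wy Ag) as Em.
  destruct Ag as [H1 [H2 [H3 H4]]].
  destruct (@choice_fun (car (wo y)) (car (wo x))
    (fun t s => ord (wo y) t q -> ord (wo x) s p /\ f s = t)) as [g Hg].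
  { intro t. destruct (classic (ord (wo y) t q)) as [Ht|Ht].
    - destruct (H4 t Ht) as [s [Hs E]]; exists s; auto.
    - exists p; intro; contradiction. }
  exists g; split; [|split; [|split]].
  - intros s t Hs Ht. destruct (Hg s Hs) as [Gs Es]. destruct (Hg t Ht) as [Gt Et].
    rewrite (H1 _ _ Gs Gt) Es Et; tauto.
  - intros s Hs. destruct (Hg s Hs) as [Gs Es]. rewrite <- (H2 _ Gs), Es; auto.
  - intros s Hs. apply (Hg s Hs).
  - intros s Hs. exists (f s); split; auto.
    destruct (Hg (f s) (H3 s Hs)) as [G E].
    exact (emb_inj Wx Wy Em G Hs E).
Qed.

Lemma tri x y : WO (wo x) -> WO (wo y) -> pre x y \/ pre y x \/ strp x y \/ strp y x.
Proof.
  intros Wx Wy.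
  destruct (classic (inhabited (car (wo y)))) as [[y0]|Ny].
  2:{ right; left. exists (fun q => False_rect _ (Ny (inhabits q))).
      split; [|split]; intro p; destruct (Ny (inhabits p)). }
  pose (le := fun p t => t = p \/ ord (wo x) t p).
  pose (R := fun p q => exists f, emb x y (le p) f /\ f p = q).
  assert (Rfun : forall p q q', R p q -> R p q' -> q = q').
  { intros p q q' [f [Ef E]] [g [Eg E']]; subst.
    apply (emb_uniq Wx Wy Ef Eg); left; auto. }
  assert (Rrestr : forall p f t, emb x y (le p) f -> ord (wo x) t p -> R t (f t)).
  { intros p f t Ef Ht. exists f; split; auto. apply (emb_restr Ef).
    - intros s [E|Hs]; [subst; right; auto|right; eapply wo_trans; eauto].
    - intros s r [E|Hs] _ Hr; subst; right; auto. eapply wo_trans; eauto. }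
  destruct (@choice_fun (car (wo x)) (car (wo y))
     (fun p q => (exists q', R p q') -> R p q)) as [phi Hphi].
  { intro p. destruct (classic (exists q', R p q')) as [[q' H]|H]; eauto.
    exists y0; intro; contradiction. }
  pose (D := fun p => exists q, R p q).
  assert (Dphi : forall p, D p -> R p (phi p)) by (intros; apply Hphi; auto).
  assert (Dlow : forall p t, D p -> ord (wo x) t p -> D t /\ exists f, emb x y (le p) f /\ f p = phi p /\ phi t = f t).
  { intros p t Dp Ht. destruct (Dphi p Dp) as [f [Ef E]].
    split. { exists (f t). eapply Rrestr; eauto. }
    exists f; split; auto; split; auto.
    apply (Rfun t); [apply Dphi; exists (f t)|]; eapply Rrestr; eauto. }
  assert (Emb : emb x y D phi).
  { split; [|split].
    - apply mono_iff; auto. intros p q Dp Dq H.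
      destruct (Dlow q p Dq H) as [_ [f [Ef [E1 E2]]]]. rewrite -E1 E2.
      destruct Ef as [F1 _]. apply F1; [right; auto|left; auto|auto].
    - intros p Dp. destruct (Dphi p Dp) as [f [[_ [F2 _]] E]]. rewrite <- E.
      apply F2; left; auto.
    - intros p q' Dp Hq. destruct (Dphi p Dp) as [f [Ef E]].
      pose proof Ef as [_ [_ F3]]. rewrite <- E in Hq.
      destruct (F3 p q' (or_introl Logic.eq_refl) Hq) as [t [[Et|Ht] E']].
      + subst. destruct (wo_irr Wy Hq).
      + destruct (Dlow p t Dp Ht) as [Dt [g [Eg [G1 G2]]]].
        exists t; split; auto. rewrite G2 -E'. exact (emb_uniq Wx Wy Eg Ef t (or_intror Ht)). }
  assert (Ddown : forall p t, D p -> ord (wo x) t p -> D t) by (intros; eapply Dlow; eauto).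
  destruct (classic (forall p, D p)) as [AllD|NAllD].
  { left. exists phi. apply (emb_restr Emb); auto. }
  destruct (classic (forall q, exists p, D p /\ phi p = q)) as [AllE|NAllE].
  { right; left.
    destruct (choice_fun AllE) as [psi Hpsi].
    exists psi; split; [|split].
    - intros q1 q2 _ _. destruct (Hpsi q1) as [D1 E1]. destruct (Hpsi q2) as [D2 E2].
      destruct Emb as [M1 _]. rewrite (M1 _ _ D1 D2) E1 E2; tauto.
    - intros q _. destruct (Hpsi q) as [D1 E1]. destruct Emb as [_ [M2 _]].
      rewrite <- (M2 _ D1), E1; auto.
    - intros q s _ Hs. destruct (Hpsi q) as [D1 E1].
      assert (Ds : D s) by (eapply Ddown; eauto).
      exists (phi s); split; auto. destruct (Hpsi (phi s)) as [D2 E2].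
      exact (emb_inj Wx Wy Emb D2 Ds E2). }
  apply not_all_ex_not in NAllD. apply not_all_ex_not in NAllE.
  destruct (wf_min _ Wx NAllD) as [p0 [Np0 Mp0]].
  destruct (wf_min _ Wy NAllE) as [q0 [Nq0 Mq0]].
  assert (DD : forall t, D t <-> ord (wo x) t p0).
  { intro t; split.
    - intro Dt. destruct (wo_tot Wx t p0) as [H|[H|H]]; auto.
      + subst; contradiction.
      + destruct (Np0 (Ddown t p0 Dt H)).
    - intro H. apply NNPP; intro N. exact (Mp0 t N H). }
  assert (EE : forall q, (exists p, D p /\ phi p = q) <-> ord (wo y) q q0).
  { intro q; split.
    - intros [p [Dp E]]. destruct (wo_tot Wy q q0) as [H|[H|H]]; auto.
      + subst; destruct (Nq0 (ex_intro _ p (conj Dp Logic.eq_refl))).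
      + exfalso; apply Nq0. destruct Emb as [_ [_ M3]]. subst.
        destruct (M3 p q0 Dp H) as [p' [Dp' E']]. eauto.
    - intro H. apply NNPP; intro N. exact (Mq0 q N H). }
  assert (Ag : agree x y p0 q0 phi).
  { destruct Emb as [M1 [M2 M3]]. split; [|split; [|split]].
    - intros s t Hs Ht; apply M1; apply DD; auto.
    - intros s Hs; apply M2; apply DD; auto.
    - intros s Hs; apply EE; exists s; split; auto; apply DD; auto.
    - intros t Ht. apply EE in Ht. destruct Ht as [s [Ds E]]. exists s; split; auto.
      apply DD; auto. }
  destruct (A_tot (lab x p0) (lab y q0)) as [El|[Hl|Hl]].
  - exfalso. apply Np0. exists q0.
    exists (fun t => if excluded_middle_informative (t = p0) then q0 else phi t).
    split; [|destruct (excluded_middle_informative (p0 = p0)); simpl; [auto|contradiction]].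
    destruct Ag as [G1 [G2 [G3 G4]]].
    split; [|split].
    + intros s t [Es|Hs] [Et|Ht];
      destruct (excluded_middle_informative (s = p0)) as [S|S];
      destruct (excluded_middle_informative (t = p0)) as [T|T]; subst; simpl;
      try contradiction; try (destruct (wo_irr Wx Hs)); try (destruct (wo_irr Wx Ht)).
      * split; intro H; irr_tac.
      * split; intro H; [destruct (wo_asym Wx H Ht)|destruct (wo_asym Wy H (G3 t Ht))].
      * split; intro; auto.
      * apply G1; auto.
    + intros s [Es|Hs]; destruct (excluded_middle_informative (s = p0)) as [S|S];
      subst; simpl; try contradiction; try (symmetry; exact El); try irr_tac; auto.
    + intros s q' [Es|Hs]; destruct (excluded_middle_informative (s = p0)) as [S|S];
      subst; simpl; try contradiction; try (destruct (wo_irr Wx Hs)); intro Hq.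
      * destruct (G4 q' Hq) as [t [Ht E]]. exists t; split; [right; auto|].
        destruct (excluded_middle_informative (t = p0)); simpl; auto. subst; destruct (wo_irr Wx Ht).
      * destruct Emb as [_ [_ M3]]. destruct (M3 s q' (proj2 (DD s) Hs) Hq) as [t [Dt E]].
        exists t; split; [right; apply DD; auto|].
        destruct (excluded_middle_informative (t = p0)); simpl; auto.
        subst. apply DD in Dt. destruct (wo_irr Wx Dt).
  - right; right; left. exists p0, q0, phi; auto.
  - right; right; right. destruct (agree_sym Wx Wy Ag) as [g Hg].
    exists q0, p0, g; auto.
Qed.


Lemma agree_restr {x y p q f} : WO (wo x) -> WO (wo y) -> agree x y p q f ->
  forall t, ord (wo x) t p -> agree x y t (f t) f.
Proof.
  intros Wx Wy [H1 [H2 [H3 H4]]] t Ht.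
  assert (L : forall s, ord (wo x) s t -> ord (wo x) s p) by (intros; eapply wo_trans; eauto).
  split; [|split; [|split]].
  - intros s r Hs Hr; apply H1; auto.
  - intros s Hs; apply H2; auto.
  - intros s Hs. apply (H1 s t (L s Hs) Ht); auto.
  - intros r Hr. destruct (H4 r (wo_trans Wy Hr (H3 t Ht))) as [s [Hs E]].
    exists s; split; auto. apply (H1 s t Hs Ht). rewrite E; auto.
Qed.

Lemma agree_comp {x y z p q r f g} : agree x y p q f -> agree y z q r g ->
  agree x z p r (fun s => g (f s)).
Proof.
  intros [F1 [F2 [F3 F4]]] [G1 [G2 [G3 G4]]]. split; [|split; [|split]].
  - intros s t Hs Ht. rewrite (F1 s t Hs Ht). apply G1; auto.
  - intros s Hs. rewrite G2; auto.
  - intros s Hs. apply G3; auto.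
  - intros t Ht. destruct (G4 t Ht) as [s' [Hs' E]]. destruct (F4 s' Hs') as [s [Hs E']].
    exists s; split; auto. rewrite E'; auto.
Qed.

Lemma agree_pre {x y z p q f F} : agree x y p q f -> emb y z (fun _ => True) F ->
  agree x z p (F q) (fun s => F (f s)).
Proof.
  intros [F1 [F2 [F3 F4]]] [G1 [G2 G3]]. split; [|split; [|split]].
  - intros s t Hs Ht. rewrite (F1 s t Hs Ht). apply G1; auto.
  - intros s Hs. rewrite G2; auto.
  - intros s Hs. apply G1; auto.
  - intros t Ht. destruct (G3 q t I Ht) as [s' [_ E]]. subst t.
    apply G1 in Ht; auto. destruct (F4 s' Ht) as [s [Hs E']].
    exists s; split; auto. rewrite E'; auto.
Qed.

Lemma pre_agree {x x' y p q f F} : WO (wo x) -> WO (wo x') -> WO (wo y) ->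
  agree x y p q f -> emb x x' (fun _ => True) F ->
  exists h, agree x' y (F p) q h.
Proof.
  intros Wx Wx' Wy Ag EF. destruct (agree_sym Wx Wy Ag) as [g Hg].
  pose proof (agree_pre Hg EF) as H2.
  destruct (agree_sym Wy Wx' H2) as [h Hh]. eauto.
Qed.

Lemma pre_refl x : pre x x.
Proof.
  exists (fun t => t); split; [|split]; try tauto.
  intros p q' _ H; exists q'; auto.
Qed.

Lemma pre_trans {x y z} : pre x y -> pre y z -> pre x z.
Proof.
  intros [f Hf] [g Hg]. exists (fun p => g (f p)). apply (emb_comp Hf Hg); auto.
Qed.

Lemma str_pre {x y x' y'} : WO (wo x) -> WO (wo y) -> WO (wo x') -> WO (wo y') ->
  strp x y -> pre x x' -> pre y y' -> strp x' y'.
Proof.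
  intros Wx Wy Wx' Wy' [p [q [f [Ag L]]]] [F HF] [G HG].
  pose proof (agree_pre Ag HG) as A1.
  destruct (pre_agree Wx Wx' Wy' A1 HF) as [h Hh].
  exists (F p), (G q), h; split; auto.
  destruct HF as [_ [F2 _]]. destruct HG as [_ [G2 _]].
  rewrite F2 ?G2; auto.
Qed.

Lemma agree_pos {x y p q f F} : WO (wo x) -> WO (wo y) -> agree x y p q f ->
  emb x y (fun _ => True) F -> F p = q.
Proof.
  intros Wx Wy Ag EF.
  pose proof (agree_emb Wy Ag) as E1.
  assert (E2 : emb x y (fun s => ord (wo x) s p) F).
  { apply (emb_restr EF); auto. intros; eapply wo_trans; eauto. }
  pose proof (emb_uniq Wx Wy E1 E2) as U.
  destruct Ag as [H1 [H2 [H3 H4]]].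
  destruct (wo_tot Wy (F p) q) as [H|[H|H]]; auto.
  - destruct (H4 _ H) as [s [Hs E]]. rewrite (U s Hs) in E.
    pose proof (emb_inj Wx Wy EF I I E); subst. irr_tac.
  - destruct EF as [F1 [F2 F3]]. destruct (F3 p q I H) as [s [_ E]].
    subst q. apply F1 in H; auto. pose proof (H3 s H) as H'. rewrite (U s H) in H'. irr_tac.
Qed.

Lemma str_irrefl {x} : WO (wo x) -> strp x x -> False.
Proof.
  intros Wx [p [q [f [Ag L]]]].
  assert (E : (fun t => t) p = q).
  { apply (@agree_pos x x p q f (fun t => t) Wx Wx Ag).
    split; [|split]; try tauto. intros p0 q' _ H; exists q'; auto. }
  simpl in E; subst. exact (A_irr L).
Qed.

Lemma pre_str_contra1 {x y} : WO (wo x) -> WO (wo y) -> pre x y -> strp x y -> False.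
Proof.
  intros Wx Wy P S. apply (str_irrefl Wy). apply (str_pre Wx Wy Wy Wy S P (pre_refl y)).
Qed.

Lemma pre_str_contra2 {x y} : WO (wo x) -> WO (wo y) -> pre x y -> strp y x -> False.
Proof.
  intros Wx Wy P S. apply (str_irrefl Wy). apply (str_pre Wy Wx Wy Wy S (pre_refl y) P).
Qed.

Lemma str_trans {x y z} : WO (wo x) -> WO (wo y) -> WO (wo z) ->
  strp x y -> strp y z -> strp x z.
Proof.
  intros Wx Wy Wz [p [q [f [Af Lf]]]] [q' [r [g [Ag Lg]]]].
  destruct (wo_tot Wy q q') as [H|[H|H]].
  - pose proof (agree_restr Wy Wz Ag q H) as Ag'.
    exists p, (g q), (fun s => g (f s)); split. apply (agree_comp Af Ag').
    destruct Ag as [_ [G2 _]]. rewrite G2; auto.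
  - subst. exists p, r, (fun s => g (f s)); split. apply (agree_comp Af Ag).
    eapply A_trans; eauto.
  - pose proof Af as [F1 [F2 [F3 F4]]]. destruct (F4 q' H) as [s [Hs E]].
    pose proof (agree_restr Wx Wy Af s Hs) as Af'. rewrite E in Af'.
    exists s, r, (fun t => g (f t)); split. apply (agree_comp Af' Ag).
    rewrite <- (F2 s Hs), E; auto.
Qed.


Definition sub (O : lorder) (P : car O -> Prop) : lorder :=
  @LOrder {t | P t} (fun s t => ord O (proj1_sig s) (proj1_sig t))
    (fun s => enc O (proj1_sig s)).
Definition subw x (P : car (wo x) -> Prop) : word A :=
  @Word _ A (sub (wo x) P) (fun s => lab x (proj1_sig s)).

Lemma sig_eq {T : Type} {P : T -> Prop} (s t : {x | P x}) :
  proj1_sig s = proj1_sig t -> s = t.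
Proof. destruct s, t; simpl; intro; subst; f_equal; apply proof_irrelevance. Qed.

Lemma WO_sub O P : WO O -> WO (sub O P).
Proof.
  intros W; split; [|split; [|split]]; simpl.
  - intros p; apply (wo_irr W).
  - intros p q r; apply (wo_trans W).
  - intros p q. destruct (wo_tot W (proj1_sig p) (proj1_sig q)) as [H|[H|H]]; auto.
    right; left; apply sig_eq; auto.
  - apply (Inverse_Image.wf_inverse_image _ _ (ord O) (@proj1_sig _ _)). apply (wo_wf W).
Qed.

Lemma is_ord_sub O P : is_ord O -> is_ord (sub O P).
Proof.
  intros H. pose proof (WO_sub O P (is_ord_WO H)) as [W1 [W2 [W3 W4]]].
  split; [|split; [|split; [|split]]]; auto.
  intros p q E. apply sig_eq. destruct H as [H _]. apply H; auto.
Qed.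

Lemma WO_cat x y : WO (wo x) -> WO (wo y) -> WO (wo (wcat x y)).
Proof.
  intros Wx Wy; split; [|split; [|split]]; simpl.
  - intros [p|p]; simpl; [apply (wo_irr Wx)|apply (wo_irr Wy)].
  - intros [p|p] [q|q] [r|r]; simpl; try tauto; [apply (wo_trans Wx)|apply (wo_trans Wy)].
  - intros [p|p] [q|q]; simpl; auto.
    + destruct (wo_tot Wx p q) as [H|[H|H]]; subst; auto.
    + destruct (wo_tot Wy p q) as [H|[H|H]]; subst; auto.
  - assert (HA : forall a, Acc (@cat_ord (wo x) (wo y)) (inl a)).
    { intro a. induction a as [a IH] using (well_founded_ind (wo_wf Wx)).
      constructor. intros [a'|b'] H; simpl in H; [apply IH; auto|contradiction]. }
    intros [a|b]; auto.
    induction b as [b IH] using (well_founded_ind (wo_wf Wy)).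
    constructor. intros [a'|b'] H; simpl in H; [apply HA|apply IH; auto].
Qed.

Lemma WO_pow x a : WO (wo x) -> WO a -> WO (wo (wpow x a)).
Proof.
  intros Wx Wa; split; [|split; [|split]]; simpl.
  - intros [i p]; unfold pow_ord; simpl. intros [H|[_ H]]; [apply (wo_irr Wa H)|apply (wo_irr Wx H)].
  - intros [i p] [j q] [k r]; unfold pow_ord; simpl.
    intros [H1|[E1 H1]] [H2|[E2 H2]]; subst; auto.
    + left; eapply wo_trans; eauto.
    + right; split; auto; eapply wo_trans; eauto.
  - intros [i p] [j q]; unfold pow_ord; simpl.
    destruct (wo_tot Wa i j) as [H|[H|H]]; auto. subst.
    destruct (wo_tot Wx p q) as [H|[H|H]]; subst; auto.
  - intros [i p]. revert p.
    induction i as [i IHi] using (well_founded_ind (wo_wf Wa)). intro p.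
    induction p as [p IHp] using (well_founded_ind (wo_wf Wx)).
    constructor. intros [j q] [H|[E H]]; simpl in *; [apply IHi; auto|subst; apply IHp; auto].
Qed.

Lemma WO_letter (a : A) : WO (wo (letter a)).
Proof.
  split; [|split; [|split]]; simpl; try tauto.
  - intros [] []; auto.
  - intros p; constructor; intros q H; contradiction.
Qed.

Lemma WO_suffix x g : WO (wo x) -> WO (wo (suffix x g)).
Proof. intro W; exact (WO_sub (wo x) (fun t => t = g \/ ord (wo x) g t) W). Qed.

Lemma WO_subw x P : WO (wo x) -> WO (wo (subw x P)).
Proof. intro W; exact (WO_sub (wo x) P W). Qed.

Lemma mk_eq {x y} (f : car (wo x) -> car (wo y)) : WO (wo x) -> WO (wo y) ->
  (forall p q, ord (wo x) p q <-> ord (wo y) (f p) (f q)) ->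
  (forall p, lab y (f p) = lab x p) -> (forall q, exists p, f p = q) -> word_eq x y.
Proof.
  intros Wx Wy H1 H2 H3. destruct (choice_fun H3) as [g Hg].
  assert (Em : emb x y (fun _ => True) f).
  { split; [|split]; auto. intros p q' _ _; destruct (H3 q') as [p' E]; eauto. }
  exists f, g; split; [|split; [|split]]; auto.
  intro p. exact (emb_inj Wx Wy Em I I (Hg (f p))).
Qed.

Lemma word_eq_sym x y : word_eq x y -> word_eq y x.
Proof.
  intros [f [g [H1 [H2 [H3 H4]]]]]. exists g, f; split; [|split; [|split]]; auto.
  - intros p q. rewrite (H3 (g p) (g q)) !H2; tauto.
  - intros p. rewrite <- (H4 (g p)), H2; auto.
Qed.

Lemma word_eq_trans x y z : word_eq x y -> word_eq y z -> word_eq x z.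
Proof.
  intros [f [g [H1 [H2 [H3 H4]]]]] [f' [g' [H1' [H2' [H3' H4']]]]].
  exists (fun p => f' (f p)), (fun q => g (g' q)); split; [|split; [|split]].
  - intro p; rewrite H1'; auto.
  - intro q; rewrite H2; auto.
  - intros p q; rewrite H3 H3'; tauto.
  - intro p; rewrite H4' H4; auto.
Qed.

Lemma eq_pre x y : word_eq x y -> pre x y.
Proof.
  intros [f [g [H1 [H2 [H3 H4]]]]]. exists f; split; [|split]; auto.
  intros p q' _ _; exists (g q'); auto.
Qed.

Lemma pre_antisym x y : WO (wo x) -> WO (wo y) -> pre x y -> pre y x -> word_eq x y.
Proof.
  intros Wx Wy [f Hf] [g Hg].
  pose proof (emb_comp Hf Hg (fun _ _ => I)) as Hgf.
  pose proof (emb_comp Hg Hf (fun _ _ => I)) as Hfg.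
  assert (Id : forall z, WO (wo z) -> emb z z (fun _ => True) (fun t => t)).
  { intros z Wz; split; [|split]; try tauto. intros p q' _ _; exists q'; auto. }
  pose proof (emb_uniq Wx Wx Hgf (Id x Wx)) as U1.
  pose proof (emb_uniq Wy Wy Hfg (Id y Wy)) as U2.
  destruct Hf as [F1 [F2 _]].
  exists f, g; split; [|split; [|split]]; auto.
Qed.

Lemma str_iff x y : WO (wo x) -> WO (wo y) -> (str_lt x y <-> strp x y).
Proof.
  intros Wx Wy; split.
  - intros [y0 [a [b [z [z' [Hab [[f1 [g1 [A1 [B1 [C1 D1]]]]] [f2 [g2 [A2 [B2 [C2 D2]]]]]]]]]]]].
    pose (p := g1 (inr (inl tt))). pose (q := g2 (inr (inl tt))).
    assert (K1 : forall s, ord (wo x) s p <-> exists s0, f1 s = inl s0).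
    { intro s. rewrite (C1 s p). unfold p; rewrite B1. destruct (f1 s) as [s0|[[]|s0]]; simpl.
      - split; eauto.
      - split; [tauto|intros [s0 E]; discriminate].
      - split; [tauto|intros [s1 E]; discriminate]. }
    assert (K2 : forall t, ord (wo y) t q <-> exists t0, f2 t = inl t0).
    { intro t. rewrite (C2 t q). unfold q; rewrite B2. destruct (f2 t) as [s0|[[]|s0]]; simpl.
      - split; eauto.
      - split; [tauto|intros [s0 E]; discriminate].
      - split; [tauto|intros [s1 E]; discriminate]. }
    assert (O2 : forall u v, ord (wo y) (g2 u) (g2 v) <-> ord (wo (wcat y0 (wcat (letter b) z'))) u v).
    { intros u v; rewrite C2 !B2; tauto. }
    assert (L2 : forall u, lab y (g2 u) = lab (wcat y0 (wcat (letter b) z')) u).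
    { intro u; rewrite <- (D2 (g2 u)), B2; auto. }
    pose (f := fun t => g2 (match f1 t with inl s => inl s | inr _ => inr (inl tt) end)).
    assert (Ef : forall s s0, f1 s = inl s0 -> f s = g2 (inl s0)).
    { intros s s0 E; unfold f; rewrite E; auto. }
    exists p, q, f; split.
    + split; [|split; [|split]].
      * intros s t Hs Ht. apply K1 in Hs as [s0 Es]. apply K1 in Ht as [t0 Et].
        rewrite (Ef _ _ Es) (Ef _ _ Et) O2 C1 Es Et; simpl; tauto.
      * intros s Hs. apply K1 in Hs as [s0 Es]. rewrite (Ef _ _ Es) L2 -D1 Es; auto.
      * intros s Hs. apply K1 in Hs as [s0 Es]. rewrite (Ef _ _ Es). unfold q. apply O2; simpl; auto.
      * intros t Ht. apply K2 in Ht as [t0 Et]. exists (g1 (inl t0)); split.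
        { apply K1. exists t0; auto. }
        rewrite (Ef _ t0); auto. rewrite <- Et, A2; auto.
    + rewrite <- D1. unfold p; rewrite B1. rewrite <- D2. unfold q; rewrite B2. simpl. auto.
  - intros [p [q [f [Ag L]]]].
    pose (y0 := subw x (fun s => ord (wo x) s p)).
    pose (z := subw x (fun s => ord (wo x) p s)).
    pose (z' := subw y (fun s => ord (wo y) q s)).
    exists y0, (lab x p), (lab y q), z, z'; split; auto.
    pose proof Ag as [F1 [F2 [F3 F4]]].
    split; apply word_eq_sym.
    + apply (@mk_eq _ x (fun u : car (wo (wcat y0 (wcat (letter (lab x p)) z))) => match u with inl s => proj1_sig s | inr (inl _) => p
                                         | inr (inr s) => proj1_sig s end)).
      * apply WO_cat; [apply WO_subw; auto|apply WO_cat; [apply WO_letter|apply WO_subw; auto]].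
      * auto.
      * intros [[s Hs]|[[]|[s Hs]]] [[t Ht]|[[]|[t Ht]]]; simpl; try tauto.
        -- split; auto; intros _; eapply wo_trans; eauto.
        -- split; [tauto|intro H; destruct (wo_asym Wx H Ht)].
        -- split; [tauto|intro H; irr_tac].
        -- split; [tauto|intro H; destruct (wo_asym Wx H (wo_trans Wx Ht Hs))].
        -- split; [tauto|intro H; destruct (wo_asym Wx H Hs)].
      * intros [[s Hs]|[[]|[s Hs]]]; simpl; auto.
      * intro t. destruct (wo_tot Wx t p) as [H|[H|H]].
        -- exists (inl (exist _ t H)); auto.
        -- exists (inr (inl tt)); auto.
        -- exists (inr (inr (exist (fun s => ord (wo x) p s) t H))); auto.
    + apply (@mk_eq _ y (fun u : car (wo (wcat y0 (wcat (letter (lab y q)) z'))) => match u with inl s => f (proj1_sig s) | inr (inl _) => q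
                                         | inr (inr s) => proj1_sig s end)).
      * apply WO_cat; [apply WO_subw; auto|apply WO_cat; [apply WO_letter|apply WO_subw; auto]].
      * auto.
      * intros [[s Hs]|[[]|[s Hs]]] [[t Ht]|[[]|[t Ht]]]; simpl; try tauto.
        -- apply F1; auto.
        -- split; auto.
        -- split; auto; intros _; eapply wo_trans; eauto.
        -- split; [tauto|intro H; destruct (wo_asym Wy H (F3 t Ht))].
        -- split; [tauto|intro H; irr_tac].
        -- split; [tauto|intro H; destruct (wo_asym Wy H (wo_trans Wy (F3 t Ht) Hs))].
        -- split; [tauto|intro H; destruct (wo_asym Wy H Hs)].
      * intros [[s Hs]|[[]|[s Hs]]]; simpl; auto.
      * intro t. destruct (wo_tot Wy t q) as [H|[H|H]].
        -- destruct (F4 t H) as [s [Hs E]].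
           exists (inl (exist (fun s => ord (wo x) s p) s Hs)); simpl; auto.
        -- exists (inr (inl tt)); auto.
        -- exists (inr (inr (exist (fun s => ord (wo y) q s) t H))); auto.
Qed.

End W.

Section W2.
Context {d : Order.disp_t} {A : finOrderType d}.
Ltac dem := match goal with |- context [excluded_middle_informative ?P] =>
  let H := fresh "EM" in destruct (excluded_middle_informative P) as [H|H] end.
Ltac irr_tac := match goal with H : ord ?O ?a ?a |- _ =>
  exfalso; apply (@wo_irr O ltac:(assumption) a H) end.

Definition into {T : Type} {P : T -> Prop} (d0 : T) (H0 : P d0) (t : T) : {x | P x} :=
  match excluded_middle_informative (P t) with
  | left H => exist P t H | right _ => exist P d0 H0 end.

Lemma into_val {T P d0 H0} {t : T} : P t -> proj1_sig (@into T P d0 H0 t) = t.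
Proof. intro H; unfold into; destruct (excluded_middle_informative (P t)); simpl; auto; contradiction. Qed.

Lemma into_id {T P d0 H0} (z : {x : T | P x}) : @into T P d0 H0 (proj1_sig z) = z.
Proof. apply sig_eq; apply into_val; exact (proj2_sig z). Qed.

Definition ge (O : lorder) th k := k = th \/ ord O th k.

Definition cw (O : lorder) (a : A) : word A := @Word _ A O (fun _ => a).

Lemma L_final (O : lorder) (a : A) (th : car O) : WO O ->
  exists h : car O -> car O,
    (forall k k', ge O th k -> ge O th k' -> (ord O k k' <-> ord O (h k) (h k'))) /\
    (forall k j, ge O th k -> ord O j (h k) -> exists k', ge O th k' /\ h k' = j).
Proof.
  intros W. pose (F := sub O (ge O th)).
  pose (ii := @into _ (ge O th) th (or_introl Logic.eq_refl)).
  destruct (tri (cw F a) (cw O a) (WO_sub O _ W) W) as [[f Hf]|[[g Hg]|[S|S]]].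
  - exists (fun k => f (ii k)). split.
    + intros k k' Hk Hk'. destruct Hf as [F1 _]. rewrite <- F1; auto. simpl.
      unfold ii; rewrite !into_val; auto. tauto.
    + intros k j Hk Hj. destruct Hf as [_ [_ F3]]. destruct (F3 _ j I Hj) as [p' [_ E]].
      exists (proj1_sig p'); split; [exact (proj2_sig p')|]. unfold ii; rewrite into_id; auto.
  - pose proof Hg as [G1 [G2 G3]].
    assert (Gm : forall p q, ord O p q -> ord O (proj1_sig (g p)) (proj1_sig (g q))).
    { intros p q H. apply (G1 p q I I) in H. exact H. }
    pose proof (selfemb (fun k => proj1_sig (g k)) W Gm) as Se.
    assert (Gs : forall k, ge O th k -> exists k0, g k0 = ii k).
    { intros k Hk. destruct (wo_tot W (proj1_sig (g k)) k) as [H|[H|H]].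
      - destruct (Se k H).
      - exists k. apply sig_eq. unfold ii; rewrite into_val; auto.
      - destruct (G3 k (ii k) I) as [k0 [_ E]]; eauto.
        simpl. unfold ii; rewrite into_val; auto. }
    destruct (@choice_fun (car O) (car O) (fun k k0 => ge O th k -> g k0 = ii k)) as [h Hh].
    { intro k. destruct (classic (ge O th k)) as [H|H].
      - destruct (Gs k H) as [k0 E]; eauto.
      - exists k; intro; contradiction. }
    exists h; split.
    + intros k k' Hk Hk'. rewrite (G1 (h k) (h k') I I) (Hh k Hk) (Hh k' Hk'). simpl.
      unfold ii; rewrite !into_val; auto. tauto.
    + intros k j Hk Hj. exists (proj1_sig (g j)); split; [exact (proj2_sig (g j))|].
      assert (Wc : WO (wo (cw O a))) by exact W.
      assert (Wf : WO (wo (cw F a))) by exact (WO_sub O _ W).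
      apply (emb_inj Wc Wf Hg I I). rewrite Hh; [|exact (proj2_sig (g j))].
      unfold ii; apply into_id.
  - destruct S as [p [q [f [_ L]]]]. simpl in L. destruct (A_irr L).
  - destruct S as [p [q [f [_ L]]]]. simpl in L. destruct (A_irr L).
Qed.

Lemma L_final2 (O : lorder) (a : A) (th : car O) : WO O ->
  exists h : car O -> car O,
    (forall k k', ge O th k -> ge O th k' -> (ord O k k' <-> ord O (h k) (h k'))) /\
    (forall k j, ge O th k -> ord O j (h k) -> exists k', ge O th k' /\ h k' = j) /\
    ((forall j, exists k, ge O th k /\ h k = j) \/
     exists m, (forall k, ge O th k -> ord O (h k) m) /\
               (forall j, ord O j m -> exists k, ge O th k /\ h k = j)).
Proof.
  intros W. destruct (L_final O a th W) as [h [H1 H2]]. exists h; split; auto; split; auto.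
  destruct (classic (forall j, exists k, ge O th k /\ h k = j)) as [S|S]; [left; auto|right].
  apply not_all_ex_not in S. destruct (wf_min _ W S) as [m [Nm Mm]].
  exists m; split.
  - intros k Hk. destruct (wo_tot W (h k) m) as [H|[H|H]]; auto.
    + subst; exfalso; apply Nm; eauto.
    + exfalso; apply Nm. destruct (H2 k m Hk H) as [k' [Hk' E]]; eauto.
  - intros j Hj. apply NNPP; intro N. exact (Mm j N Hj).
Qed.


Definition CoreH (W u : word A) (Th : lorder)
  (psi : car Th * car (wo u) -> car (wo W)) (t0 : car (wo W)) :=
  (forall x y, ord (wo (wpow u Th)) x y <-> ord (wo W) (psi x) (psi y)) /\
  (forall x, lab W (psi x) = lab u x.2) /\
  (forall x, ord (wo W) (psi x) t0) /\
  (forall t, ord (wo W) t t0 -> exists x, psi x = t) /\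
  strp u (suffix W t0).

Definition into_s (x : word A) g (t : car (wo x)) : car (wo (suffix x g)) :=
  @into _ (fun t => t = g \/ ord (wo x) g t) g (or_introl Logic.eq_refl) t.

Lemma into_s_val (x : word A) g t : t = g \/ ord (wo x) g t -> proj1_sig (into_s x g t) = t.
Proof. intro H. exact (@into_val _ (fun t => t = g \/ ord (wo x) g t) g _ t H). Qed.

Lemma into_s_id (x : word A) g (z : car (wo (suffix x g))) : into_s x g (proj1_sig z) = z.
Proof. exact (@into_id _ (fun t => t = g \/ ord (wo x) g t) g _ z). Qed.

Lemma pow_inj {W u : word A} {Th psi} : WO (wo W) -> WO Th -> WO (wo u) ->
  (forall x y, ord (wo (wpow u Th)) x y <-> ord (wo W) (psi x) (psi y)) ->
  forall x y, psi x = psi y -> x = y.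
Proof.
  intros WW WT Wu C1 x y E.
  destruct (wo_tot (WO_pow u Th Wu WT) x y) as [H|[H|H]]; auto.
  - apply C1 in H; rewrite E in H; irr_tac.
  - apply C1 in H; rewrite E in H; irr_tac.
Qed.

Lemma h_inj {O th} {h : car O -> car O} : WO O ->
  (forall k k', ge O th k -> ge O th k' -> (ord O k k' <-> ord O (h k) (h k'))) ->
  forall k k', ge O th k -> ge O th k' -> h k = h k' -> k = k'.
Proof.
  intros W H1 k k' G G' E. destruct (wo_tot W k k') as [H|[H|H]]; auto.
  - apply (H1 _ _ G G') in H; rewrite E in H; irr_tac.
  - apply (H1 _ _ G' G) in H; rewrite E in H; irr_tac.
Qed.

Lemma core1 (W u : word A) Th psi t0 mu : WO (wo W) -> WO Th -> WO (wo u) ->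
  CoreH W u Th psi t0 -> (forall p, ~ ord (wo u) p mu) -> forall th,
  word_eq W (suffix W (psi (th, mu))) \/ strp W (suffix W (psi (th, mu))).
Proof.
  intros WW WT Wu [C1 [C2 [C3 [C4 C5]]]] Hmu th.
  pose proof (pow_inj WW WT Wu C1) as Pinj.
  destruct (@choice_fun (car (wo W)) (car Th * car (wo u))
     (fun t x => ord (wo W) t t0 -> psi x = t)) as [pinv Hpinv].
  { intro t. destruct (classic (ord (wo W) t t0)) as [H|H].
    - destruct (C4 t H) as [x E]; eauto.
    - exists (th, mu); intro; contradiction. }
  assert (Pinv : forall x, pinv (psi x) = x) by (intro x; apply Pinj; apply Hpinv; auto).
  pose (b := psi (th, mu)).
  assert (K : forall k p, (psi (k, p) = b \/ ord (wo W) b (psi (k, p))) <-> ge Th th k).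
  { intros k p; split.
    - intros [E|H].
      + apply Pinj in E. inversion E; left; auto.
      + apply C1 in H. destruct H as [H|[E H]]; simpl in *; [right; auto|left; auto].
    - intros [E|H]; subst.
      + destruct (wo_tot Wu p mu) as [H|[H|H]]; [destruct (Hmu p H)|left; subst; auto|].
        right; apply C1; right; simpl; auto.
      + right; apply C1; left; auto. }
  assert (Bt0 : ord (wo W) b t0) by apply C3.
  assert (Ge0 : forall t, ~ ord (wo W) t t0 -> t = b \/ ord (wo W) b t).
  { intros t Ht. right. destruct (wo_tot WW t t0) as [H|[H|H]]; [contradiction|subst; auto|].
    eapply wo_trans; eauto. }
  assert (WZ : WO (wo (suffix W b))) by (apply WO_suffix; auto).
  assert (Lt0 : forall z : car (wo (suffix W b)), ord (wo W) (proj1_sig z) t0 ->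
            exists k p, psi (k, p) = proj1_sig z /\ pinv (proj1_sig z) = (k, p) /\ ge Th th k).
  { intros z Hz. destruct (C4 _ Hz) as [[k p] E]. exists k, p; split; auto.
    rewrite <- E, Pinv; split; auto. apply (K k p). rewrite E. exact (proj2_sig z). }
  destruct (L_final2 Th (lab u mu) th WT) as [h [H1 [H2 [Hs|[m [Hm1 Hm2]]]]]].
  -
    left. apply word_eq_sym.
    pose (M := fun z : car (wo (suffix W b)) =>
      if excluded_middle_informative (ord (wo W) (proj1_sig z) t0)
      then psi (h (pinv (proj1_sig z)).1, (pinv (proj1_sig z)).2) else proj1_sig z).
    assert (MA : forall z k p, psi (k, p) = proj1_sig z -> ge Th th k -> M z = psi (h k, p)).
    { intros z k p E G. unfold M. rewrite <- E, Pinv.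
      destruct (excluded_middle_informative (ord (wo W) (psi (k, p)) t0)) as [HH|NN]; auto.
      destruct (NN (C3 _)). }
    assert (MB : forall z, ~ ord (wo W) (proj1_sig z) t0 -> M z = proj1_sig z).
    { intros z NN. unfold M. destruct (excluded_middle_informative (ord (wo W) (proj1_sig z) t0)); auto; contradiction. }
    clearbody M.
    apply (mk_eq M WZ WW).
    + intros z1 z2. change (ord (wo W) (proj1_sig z1) (proj1_sig z2) <-> ord (wo W) (M z1) (M z2)).
      destruct (classic (ord (wo W) (proj1_sig z1) t0)) as [L1|L1];
      destruct (classic (ord (wo W) (proj1_sig z2) t0)) as [L2|L2].
      * destruct (Lt0 z1 L1) as [k1 [p1 [E1 [_ G1]]]]. destruct (Lt0 z2 L2) as [k2 [p2 [E2 [_ G2]]]].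
        rewrite (MA _ _ _ E1 G1) (MA _ _ _ E2 G2) -E1 -E2 -!C1. simpl. unfold pow_ord; simpl.
        rewrite (H1 k1 k2 G1 G2). split; intros [H|[E H]]; auto; right; split; auto.
        -- subst; auto.
        -- apply (h_inj WT H1 _ _ G1 G2 E).
      * destruct (Lt0 z1 L1) as [k1 [p1 [E1 [_ G1]]]]. rewrite (MA _ _ _ E1 G1) (MB _ L2).
        assert (T2 : proj1_sig z2 = t0 \/ ord (wo W) t0 (proj1_sig z2)).
        { destruct (wo_tot WW (proj1_sig z2) t0) as [H|[H|H]]; auto; contradiction. }
        split; intros _; destruct T2 as [E|H'].
        -- rewrite E; apply C3.
        -- exact (wo_trans WW (C3 _) H').
        -- rewrite E; exact L1.
        -- exact (wo_trans WW L1 H').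
      * destruct (Lt0 z2 L2) as [k2 [p2 [E2 [_ G2]]]]. rewrite (MA _ _ _ E2 G2) (MB _ L1).
        split; intro H; exfalso.
        -- destruct (wo_tot WW (proj1_sig z1) t0) as [H'|[H'|H']]; [contradiction| |].
           ++ rewrite H' in H. exact (wo_asym WW H L2).
           ++ exact (wo_asym WW H (wo_trans WW L2 H')).
        -- destruct (wo_tot WW (proj1_sig z1) t0) as [H'|[H'|H']]; [contradiction| |].
           ++ rewrite H' in H. exact (wo_asym WW H (C3 _)).
           ++ exact (wo_asym WW H (wo_trans WW (C3 _) H')).
      * rewrite (MB _ L1) (MB _ L2). tauto.
    + intro z. destruct (classic (ord (wo W) (proj1_sig z) t0)) as [L1|L1].
      * destruct (Lt0 z L1) as [k1 [p1 [E1 [_ G1]]]]. rewrite (MA _ _ _ E1 G1) C2.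
        simpl. rewrite <- E1, C2; auto.
      * rewrite (MB _ L1); auto.
    + intro t. destruct (classic (ord (wo W) t t0)) as [L1|L1].
      * destruct (C4 t L1) as [[j p] E]. destruct (Hs j) as [k [G Ek]].
        exists (into_s W b (psi (k, p))). rewrite -E -Ek. apply (MA _ k p); auto.
        rewrite into_s_val; auto. apply K; auto.
      * exists (into_s W b t). rewrite MB; rewrite into_s_val; auto.
  -
    right.
    destruct C5 as [p1 [q1 [f1 [[F1 [F2 [F3 F4]]] L1]]]].
    destruct (@choice_fun (car Th) (car Th)
       (fun j k => ord Th j m -> ge Th th k /\ h k = j)) as [g Hg].
    { intro j. destruct (classic (ord Th j m)) as [H|H].
      - destruct (Hm2 j H) as [k [G E]]; eauto.
      - exists th; intro; contradiction. }
    assert (Ggh : forall k, ge Th th k -> g (h k) = k).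
    { intros k G. destruct (Hg (h k) (Hm1 k G)) as [G' E]. apply (h_inj WT H1 _ _ G' G E). }
    assert (Giff : forall j j', ord Th j m -> ord Th j' m -> (ord Th j j' <-> ord Th (g j) (g j'))).
    { intros j j' Hj Hj'. destruct (Hg j Hj) as [G E]. destruct (Hg j' Hj') as [G' E'].
      rewrite (H1 _ _ G G') E E'; tauto. }
    assert (Ginj : forall j j', ord Th j m -> ord Th j' m -> g j = g j' -> j = j').
    { intros j j' Hj Hj' E. destruct (Hg j Hj) as [_ E1]. destruct (Hg j' Hj') as [_ E2].
      rewrite <- E1, <- E2, E; auto. }
    pose (P := psi (m, p1)).
    assert (Q1 : ord (wo W) b (proj1_sig q1)).
    { destruct (proj2_sig q1) as [E|H]; [rewrite E; auto|eapply wo_trans; eauto]. }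
    pose (Q := into_s W b (proj1_sig q1)).
    assert (QV : proj1_sig Q = proj1_sig q1) by (apply into_s_val; auto).
    clearbody Q.
    pose (V := fun t => if excluded_middle_informative (ord (wo W) t t0) then
       (if excluded_middle_informative (ord Th (pinv t).1 m) then psi (g (pinv t).1, (pinv t).2)
        else proj1_sig (f1 (pinv t).2)) else t).
    assert (Cl : forall t, ord (wo W) t P ->
       (exists k p, psi (k, p) = t /\ ord Th k m /\ V t = psi (g k, p)) \/
       (exists p, psi (m, p) = t /\ ord (wo u) p p1 /\ V t = proj1_sig (f1 p))).
    { intros t Ht. assert (Ht0 : ord (wo W) t t0) by (eapply (wo_trans WW); [exact Ht|apply C3]).
      destruct (C4 t Ht0) as [[k p] E]. subst t. unfold V.
      dem; [|contradiction]. rewrite Pinv. simpl.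
      apply C1 in Ht. destruct Ht as [Hk|[Ek Hp]]; simpl in *.
      - left; exists k, p; split; auto; split; auto.
        dem; simpl; auto; contradiction.
      - subst; right; exists p; split; auto; split; auto.
        dem; simpl; auto. irr_tac. }
    clearbody V.
    assert (Vmem : forall t, ord (wo W) t P -> V t = b \/ ord (wo W) b (V t)).
    { intros t Ht. destruct (Cl t Ht) as [[k [p [_ [Hk E]]]]|[p [_ [Hp E]]]]; rewrite E.
      - apply K. apply (Hg k Hk).
      - apply Ge0. intro H. destruct (proj2_sig (f1 p)) as [E'|H']; [rewrite E' in H; irr_tac|].
        exact (wo_asym WW H H'). }
    assert (Vt0 : forall p, ~ ord (wo W) (proj1_sig (f1 p)) t0).
    { intros p H. destruct (proj2_sig (f1 p)) as [E'|H']; [rewrite E' in H; irr_tac|].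
      exact (wo_asym WW H H'). }
    pose (N := fun t => into_s W b (V t)).
    assert (NV : forall t, ord (wo W) t P -> proj1_sig (N t) = V t) by (intros; apply into_s_val; auto).
    clearbody N.
    exists P, Q, N; split.
    + split; [|split; [|split]].
      * intros s t Hs Ht. change (ord (wo W) s t <-> ord (wo W) (proj1_sig (N s)) (proj1_sig (N t))).
        rewrite (NV s Hs) (NV t Ht).
        destruct (Cl s Hs) as [[k [p [Es [Hk E]]]]|[p [Es [Hp E]]]];
        destruct (Cl t Ht) as [[k' [p' [Et [Hk' E']]]]|[p' [Et [Hp' E']]]];
        rewrite E E'; subst s t; rewrite -!C1; simpl; unfold pow_ord; simpl.
        -- rewrite (Giff k k' Hk Hk'). split; intros [H|[Ee H]].
           ++ left; auto.
           ++ right; subst; auto.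
           ++ left; auto.
           ++ right; split; auto.
        -- split; intros _; [|left; auto].
           destruct (wo_tot WW (proj1_sig (f1 p')) t0) as [H|[H|H]]; [destruct (Vt0 _ H)| |].
           ++ rewrite H; apply C3.
           ++ eapply (wo_trans WW); [apply C3|exact H].
        -- split; intro H; exfalso.
           ++ destruct H as [H|[Ee H]]; [exact (wo_asym WT H Hk')|subst; irr_tac].
           ++ apply (Vt0 p). eapply (wo_trans WW); [exact H|apply C3].
        -- rewrite (F1 p p' Hp Hp'). split; intro H;
             [destruct H as [H|[_ H]]; [irr_tac|exact H]|right; split; auto].
      * intros s Hs. change (lab W (proj1_sig (N s)) = lab W s). rewrite (NV s Hs).
        destruct (Cl s Hs) as [[k [p [Es [Hk E]]]]|[p [Es [Hp E]]]]; rewrite E; subst s.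
        -- rewrite !C2; auto.
        -- rewrite C2. simpl. rewrite <- (F2 p Hp). auto.
      * intros s Hs. change (ord (wo W) (proj1_sig (N s)) (proj1_sig Q)). rewrite (NV s Hs) QV.
        destruct (Cl s Hs) as [[k [p [Es [Hk E]]]]|[p [Es [Hp E]]]]; rewrite E.
        -- destruct (proj2_sig q1) as [E'|H']; [rewrite E'; apply C3|eapply (wo_trans WW); [apply C3|exact H']].
        -- exact (F3 p Hp).
      * intros z Hz. change (ord (wo W) (proj1_sig z) (proj1_sig Q)) in Hz. rewrite QV in Hz.
        destruct (classic (ord (wo W) (proj1_sig z) t0)) as [L|L].
        -- destruct (Lt0 z L) as [k [p [E [_ G]]]].
           assert (Hj : ord (wo W) (psi (h k, p)) P) by (apply C1; left; apply Hm1; auto).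
           exists (psi (h k, p)); split; auto.
           apply sig_eq. rewrite (NV _ Hj).
           destruct (Cl _ Hj) as [[k' [p' [Es [Hk E']]]]|[p' [Es [Hp E']]]].
           ++ apply Pinj in Es. inversion Es; subst. rewrite E' Ggh; auto.
           ++ apply Pinj in Es. inversion Es. pose proof (Hm1 k G) as HH. rewrite <- H0 in HH. irr_tac.
        -- assert (Mz : proj1_sig z = t0 \/ ord (wo W) t0 (proj1_sig z)).
           { destruct (wo_tot WW (proj1_sig z) t0) as [H|[H|H]]; auto; contradiction. }
           pose (z' := into_s W t0 (proj1_sig z)).
           assert (Z' : proj1_sig z' = proj1_sig z) by (apply into_s_val; auto).
           clearbody z'.
           destruct (F4 z') as [p [Hp E]]. { change (ord (wo W) (proj1_sig z') (proj1_sig q1)). rewrite Z'; auto. }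
           assert (Hj : ord (wo W) (psi (m, p)) P) by (apply C1; right; simpl; auto).
           exists (psi (m, p)); split; auto.
           apply sig_eq. rewrite (NV _ Hj).
           destruct (Cl _ Hj) as [[k' [p' [Es [Hk E']]]]|[p' [Es [Hp' E']]]].
           ++ apply Pinj in Es. inversion Es; subst. irr_tac.
           ++ apply Pinj in Es. inversion Es; subst. rewrite E'; congruence.
    + change ((lab W (psi (m, p1)) < lab W (proj1_sig Q))%O). rewrite QV C2. exact L1.
Qed.


Lemma core2 (W u : word A) Th psi t0 : WO (wo W) -> WO Th -> WO (wo u) ->
  CoreH W u Th psi t0 -> inhabited (car Th) -> strp W (suffix W t0).
Proof.
  intros WW WT Wu [C1 [C2 [C3 [C4 C5]]]] [th0].
  destruct (wf_min (fun _ => True) WT (ex_intro _ th0 I)) as [tm [_ Hm]].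
  assert (P : pre u W).
  { exists (fun p => psi (tm, p)); split; [|split].
    - intros p q _ _. rewrite <- C1. simpl; unfold pow_ord; simpl. split; auto.
      intros [H|[_ H]]; auto. irr_tac.
    - intros p _; rewrite C2; auto.
    - intros p t _ Ht. assert (Ht0 : ord (wo W) t t0) by (eapply (wo_trans WW); [exact Ht|apply C3]).
      destruct (C4 t Ht0) as [[k q] E]. subst t. apply C1 in Ht. destruct Ht as [H|[Ek H]]; simpl in *.
      + destruct (Hm k I H).
      + subst. exists q; split; auto. }
  apply (str_pre Wu (WO_suffix _ _ WW) WW (WO_suffix _ _ WW) C5 P (pre_refl _)).
Qed.

Lemma coreH_pre (W W2 u : word A) Th psi t0 E : WO (wo W) -> WO (wo W2) -> WO Th -> WO (wo u) ->
  CoreH W u Th psi t0 -> emb W W2 (fun _ => True) E ->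
  CoreH W2 u Th (fun x => E (psi x)) (E t0).
Proof.
  intros WW WW2 WT Wu [C1 [C2 [C3 [C4 C5]]]] HE. pose proof HE as [E1 [E2 E3]].
  split; [|split; [|split; [|split]]].
  - intros x y; rewrite C1; apply E1; auto.
  - intros x; rewrite E2; auto.
  - intros x; apply E1; auto.
  - intros t Ht. destruct (E3 t0 t I Ht) as [t' [_ Et]]. subst t.
    apply E1 in Ht; auto. destruct (C4 t' Ht) as [x Ex]. exists x; rewrite Ex; auto.
  - apply (str_pre Wu (WO_suffix _ _ WW) Wu (WO_suffix _ _ WW2) C5 (pre_refl _)).
    assert (Mem : forall z : car (wo (suffix W t0)), E (proj1_sig z) = E t0 \/ ord (wo W2) (E t0) (E (proj1_sig z))).
    { intro z. destruct (proj2_sig z) as [H|H]; [left; rewrite H; auto|right; apply E1; auto]. }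
    exists (fun z => into_s W2 (E t0) (E (proj1_sig z))); split; [|split].
    + intros z1 z2 _ _. change (ord (wo W) (proj1_sig z1) (proj1_sig z2) <->
        ord (wo W2) (proj1_sig (into_s W2 (E t0) (E (proj1_sig z1)))) (proj1_sig (into_s W2 (E t0) (E (proj1_sig z2))))).
      rewrite !into_s_val; try (apply E1; auto); auto.
    + intros z _. change (lab W2 (proj1_sig (into_s W2 (E t0) (E (proj1_sig z)))) = lab W (proj1_sig z)).
      rewrite into_s_val; auto.
    + intros z z2 _ Hz. change (ord (wo W2) (proj1_sig z2) (proj1_sig (into_s W2 (E t0) (E (proj1_sig z))))) in Hz.
      rewrite into_s_val in Hz; auto.
      destruct (E3 _ _ I Hz) as [s [_ Es]].
      assert (Ms : s = t0 \/ ord (wo W) t0 s).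
      { destruct (proj2_sig z2) as [H|H].
        - left. rewrite <- Es in H. exact (emb_inj WW WW2 HE I I H).
        - right. rewrite <- Es in H. apply E1 in H; auto. }
      exists (into_s W t0 s); split; auto. apply sig_eq. rewrite !into_s_val; auto.
      destruct Ms as [Hs|Hs]; [left; rewrite Hs; auto|right; apply E1; auto].
Qed.

End W2.

Section W3.
Context {d : Order.disp_t} {A : finOrderType d}.
Ltac dem := match goal with |- context [excluded_middle_informative ?P] =>
  let H := fresh "EM" in destruct (excluded_middle_informative P) as [H|H] end.
Ltac irr_tac := match goal with H : ord ?O ?a ?a |- _ =>
  exfalso; apply (@wo_irr O ltac:(assumption) a H) end.

Definition two : lorder := @LOrder bool (fun a b => a = false /\ b = true)
  (fun b => if b then 1 else 0)%N.

Lemma is_ord_two : is_ord two.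
Proof.
  split; [|split; [|split; [|split]]]; simpl.
  - intros [] []; simpl; auto; discriminate.
  - intros p [H1 H2]; congruence.
  - intros p q r [H1 H2] [H3 H4]; congruence.
  - intros [] []; auto.
  - assert (Af : Acc (fun a b : bool => a = false /\ b = true) false).
    { constructor. intros y [_ H]; discriminate. }
    intros []; auto. constructor. intros y [H _]; subst; auto.
Qed.

Lemma not_one_two : ~ is_one two.
Proof. intros [t H]. pose proof (H true). pose proof (H false). congruence. Qed.

Lemma prime_inh (x : word A) : is_word x -> prime_word x -> inhabited (car (wo x)).
Proof.
  intros Wx [Pr _]. apply NNPP; intro N.
  assert (E : word_eq x (wpow x two)).
  { exists (fun p => (false, p)), (fun q => q.2).
    split; [|split; [|split]]; try (intros [b p]); intros; exfalso; apply N; constructor; auto. }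
  destruct (Pr x two Wx is_ord_two E) as [H _]. exact (not_one_two H).
Qed.

Lemma luv_contra (u v : word A) : WO (wo u) -> WO (wo v) ->
  (pre u v \/ strp u v) -> ~ word_eq u v -> (pre v u \/ strp v u) -> False.
Proof.
  intros Wu Wv [H1|H1] N [H2|H2].
  - exact (N (pre_antisym u v Wu Wv H1 H2)).
  - exact (pre_str_contra1 Wu Wv H1 H2) || exact (pre_str_contra2 Wu Wv H1 H2).
  - exact (pre_str_contra2 Wv Wu H2 H1).
  - exact (str_irrefl Wu (str_trans Wu Wv Wu H1 H2)).
Qed.

Lemma tail_contra (u v : word A) r0 : WO (wo u) -> WO (wo v) -> prime_word v ->
  ~ word_eq u v -> pre u v -> proper_pos v r0 ->
  (pre (suffix v r0) u \/ strp (suffix v r0) u) -> False.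
Proof.
  intros Wu Wv [_ Pv] N Puv Hr H.
  assert (Ws : WO (wo (suffix v r0))) by (apply WO_suffix; auto).
  destruct (Pv r0 Hr) as [H1|H1]; [apply wprefix_pre in H1|apply (str_iff _ _ Wv Ws) in H1].
  - destruct H as [H|H].
    + exact (N (pre_antisym u v Wu Wv Puv (pre_trans H1 H))).
    + exact (pre_str_contra2 Wv Ws H1 (str_pre Ws Wu Ws Wv H (pre_refl _) Puv)).
  - destruct H as [H|H].
    + exact (pre_str_contra2 Ws Wv (pre_trans H Puv) H1).
    + exact (str_irrefl Wv (str_trans Wv Ws Wv H1 (str_pre Ws Wu Ws Wv H (pre_refl _) Puv))).
Qed.


Lemma shape (u v : word A) Om m p r (phi : car Om * car (wo u) -> car (wo v)) mu :
  WO (wo u) -> WO (wo v) -> WO Om -> (forall q, ~ ord (wo u) q mu) ->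
  agree (wpow u Om) v (m, p) r phi ->
  exists r0, (forall k q, ord Om k m -> ord (wo v) (phi (k, q)) r0) /\
    (forall t, ord (wo v) t r0 -> exists k q, ord Om k m /\ phi (k, q) = t) /\
    agree u (suffix v r0) p (into_s v r0 r) (fun q => into_s v r0 (phi (m, q))) /\
    proj1_sig (into_s v r0 r) = r.
Proof.
  intros Wu Wv WO' Hmu [A1 [A2 [A3 A4]]].
  assert (WU : WO (wo (wpow u Om))) by (apply WO_pow; auto).
  destruct (classic (p = mu)) as [Ep|Np].
  - subst p. exists r; split; [|split; [|split]].
    + intros k q Hk. apply A3. left; auto.
    + intros t Ht. destruct (A4 t Ht) as [[k q] [H E]]. destruct H as [H|[Ek H]]; simpl in *.
      * exists k, q; auto.
      * destruct (Hmu q H).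
    + split; [|split; [|split]].
      * intros s t Hs; destruct (Hmu s Hs).
      * intros s Hs; destruct (Hmu s Hs).
      * intros s Hs; destruct (Hmu s Hs).
      * intros z Hz. exfalso. change (ord (wo v) (proj1_sig z) (proj1_sig (into_s v r r))) in Hz.
        rewrite into_s_val in Hz; [|left; auto].
        destruct (proj2_sig z) as [E|H]; [rewrite E in Hz; irr_tac|exact (wo_asym Wv Hz H)].
    + apply into_s_val; left; auto.
  - assert (Hp : ord (wo u) mu p).
    { destruct (wo_tot Wu mu p) as [H|[H|H]]; [auto|subst; contradiction|destruct (Hmu p H)]. }
    assert (Mm : ord (wo (wpow u Om)) (m, mu) (m, p)) by (right; split; auto).
    pose (r0 := phi (m, mu)).
    assert (R0 : ord (wo v) r0 r) by (apply A3; auto).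
    assert (Mem : forall q, ord (wo u) q p -> phi (m, q) = r0 \/ ord (wo v) r0 (phi (m, q))).
    { intros q Hq. destruct (wo_tot Wu mu q) as [H|[H|H]].
      - right. apply A1; auto; right; split; auto.
      - subst; left; auto.
      - destruct (Hmu q H). }
    exists r0; split; [|split; [|split]].
    + intros k q Hk. apply A1; auto.
      * left; auto.
      * left; auto.
    + intros t Ht. destruct (A4 t (wo_trans Wv Ht R0)) as [[k q] [H E]].
      subst t. apply A1 in Ht; auto. destruct Ht as [Hk|[Ek Hq]]; simpl in *.
      * exists k, q; auto.
      * destruct (Hmu q Hq).
    + split; [|split; [|split]].
      * intros s t Hs Ht. change (ord (wo u) s t <-> ord (wo v) (proj1_sig (into_s v r0 (phi (m, s))))
            (proj1_sig (into_s v r0 (phi (m, t))))).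
        rewrite (into_s_val _ _ _ (Mem s Hs)) (into_s_val _ _ _ (Mem t Ht)).
        assert (Hs' : ord (wo (wpow u Om)) (m, s) (m, p)) by (right; simpl; auto).
        assert (Ht' : ord (wo (wpow u Om)) (m, t) (m, p)) by (right; simpl; auto).
        rewrite <- (A1 _ _ Hs' Ht'). simpl; unfold pow_ord; simpl.
        split; auto. intros [H|[_ H]]; auto. irr_tac.
      * intros s Hs. change (lab v (proj1_sig (into_s v r0 (phi (m, s)))) = lab u s).
        rewrite (into_s_val _ _ _ (Mem s Hs)).
        assert (Hs' : ord (wo (wpow u Om)) (m, s) (m, p)) by (right; simpl; auto).
        rewrite (A2 _ Hs'); auto.
      * intros s Hs. change (ord (wo v) (proj1_sig (into_s v r0 (phi (m, s)))) (proj1_sig (into_s v r0 r))).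
        assert (Mr : r = r0 \/ ord (wo v) r0 r) by (right; auto).
        rewrite (into_s_val _ _ _ (Mem s Hs)) (into_s_val _ _ _ Mr).
        apply A3. right; simpl; auto.
      * intros z Hz. change (ord (wo v) (proj1_sig z) (proj1_sig (into_s v r0 r))) in Hz.
        rewrite into_s_val in Hz; [|right; auto].
        destruct (A4 _ Hz) as [[k q] [H E]].
        destruct H as [Hk|[Ek Hq]]; simpl in *.
        -- exfalso. assert (L : ord (wo v) (phi (k, q)) r0) by (apply A1; auto; left; auto).
           rewrite E in L. destruct (proj2_sig z) as [E'|H']; [rewrite E' in L; irr_tac|exact (wo_asym Wv L H')].
        -- subst k. exists q; split; auto. apply sig_eq. rewrite into_s_val; [auto|apply Mem; auto].
    + apply into_s_val; right; auto.
Qed.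


Lemma pow_eq_sub (O : lorder) (P : car O -> Prop) (u : word A) (k k' : car (sub O P)) q q' :
  pow_ord (wo u) (sub O P) (k, q) (k', q') <->
  pow_ord (wo u) O (proj1_sig k, q) (proj1_sig k', q').
Proof.
  unfold pow_ord; simpl. split; intros [H|[E H]]; auto; right; split; auto.
  - subst; auto.
  - apply sig_eq; auto.
Qed.

Lemma factor (u v : word A) mu : is_word u -> is_word v -> prime_word v ->
  (pre u v \/ strp u v) -> ~ word_eq u v -> (forall q, ~ ord (wo u) q mu) ->
  exists (K : lorder) (phi : car K * car (wo u) -> car (wo v)) r0, WO K /\ CoreH v u K phi r0.
Proof.
  intros iu iv Pv Luv N Hmu.
  pose proof (is_ord_WO iu) as Wu. pose proof (is_ord_WO iv) as Wv.
  pose (Om := wo v). pose (U := wpow u Om).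
  assert (WOm : WO Om) by exact Wv.
  assert (WU : WO (wo U)) by (apply WO_pow; auto).
  destruct (prime_inh v iv Pv) as [mv].
  destruct (wf_min (fun _ => True) WOm (ex_intro _ mv I)) as [kmin [_ Hkmin]].
  assert (Kmin : forall m, (exists k, ord Om k m) -> ord Om kmin m).
  { intros m [k0 Hk0]. destruct (wo_tot WOm kmin m) as [H|[H|H]]; auto.
    - subst. destruct (Hkmin k0 I Hk0).
    - destruct (Hkmin m I H). }
  destruct (tri U v WU Wv) as [[e He]|[[e He]|[S|S]]].
  -
    exfalso. pose proof He as [E1 [E2 E3]].
    assert (Mono : forall r r', ord Om r r' -> ord (wo v) (e (r, mu)) (e (r', mu))).
    { intros r r' H. apply E1; auto. left; auto. }
    pose proof (selfemb (fun r => e (r, mu)) Wv Mono) as Se.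
    assert (Surj : forall q, exists x, e x = q).
    { intro q. destruct (wo_tot Wv q (e (q, mu))) as [H|[H|H]].
      - destruct (E3 (q, mu) q I H) as [x [_ Ex]]; eauto.
      - eauto.
      - destruct (Se q H). }
    assert (Heq : word_eq U v) by (apply (mk_eq e WU Wv); auto).
    destruct Pv as [Pr _].
    destruct (Pr u Om iu iv (word_eq_sym _ _ Heq)) as [_ Huv]. exact (N Huv).
  -
    exfalso. pose proof He as [E1 [E2 E3]].
    destruct (classic (forall x, exists r, e r = x)) as [Surj|NS].
    { assert (Heq : word_eq v U) by (apply (mk_eq e Wv WU); auto).
      destruct Pv as [Pr _].
      destruct (Pr u Om iu iv Heq) as [_ Huv]. exact (N Huv). }
    apply not_all_ex_not in NS. destruct (wf_min _ WU NS) as [[m p] [Nx Mx]].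
    assert (Im1 : forall r, ord (wo U) (e r) (m, p)).
    { intro r. destruct (wo_tot WU (e r) (m, p)) as [H|[H|H]]; auto.
      - exfalso; apply Nx; eauto.
      - exfalso; apply Nx. destruct (E3 r _ I H) as [r' [_ E]]; eauto. }
    assert (Im2 : forall x, ord (wo U) x (m, p) -> exists r, e r = x).
    { intros x H. apply NNPP; intro N'. exact (Mx x N' H). }
    destruct (@choice_fun (car (wo U)) (car (wo v)) (fun x r => ord (wo U) x (m, p) -> e r = x))
      as [einv Hei].
    { intro x. destruct (classic (ord (wo U) x (m, p))) as [H|H].
      - destruct (Im2 x H) as [r E]; eauto.
      - exists mv; intro; contradiction. }
    assert (Einj : forall r r', e r = e r' -> r = r') by (intros; exact (emb_inj Wv WU He I I H)).
    destruct (classic (p = mu)) as [Ep|Np].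
    + subst p. pose (K := sub Om (fun k => ord Om k m)).
      assert (Hin : forall (k : car K) q, ord (wo U) (proj1_sig k, q) (m, mu)) by (intros; left; exact (proj2_sig k)).
      assert (Heq : word_eq (wpow u K) v).
      { apply (@mk_eq _ _ (wpow u K) v (fun x : car (wo (wpow u K)) => einv (proj1_sig x.1, x.2)) (WO_pow u K Wu (WO_sub _ _ WOm)) Wv).
        - intros [k q] [k' q']. simpl. rewrite (E1 _ _ I I) (Hei _ (Hin k q)) (Hei _ (Hin k' q')).
          apply pow_eq_sub.
        - intros [k q]. simpl. rewrite <- (E2 _ I), (Hei _ (Hin k q)). auto.
        - intro r. pose proof (Im1 r) as H. destruct (e r) as [k0 q] eqn:Er.
          destruct H as [H|[Ek H]]; simpl in *; [|destruct (Hmu q H)].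
          exists (exist (fun k => ord Om k m) k0 H, q). simpl. apply Einj.
          assert (Hx : ord (wo U) (k0, q) (m, mu)) by (left; exact H). rewrite Er (Hei _ Hx); auto. }
      destruct Pv as [Pr _].
      destruct (Pr u K iu (is_ord_sub _ _ iv) (word_eq_sym _ _ Heq)) as [_ Huv]. exact (N Huv).
    + assert (Hp : ord (wo u) mu p).
      { destruct (wo_tot Wu mu p) as [H|[H|H]]; [auto|subst; contradiction|destruct (Hmu p H)]. }
      destruct (classic (exists k, ord Om k m)) as [HK|NK].
      * pose proof (Kmin m HK) as Hkm.
        assert (Hm0 : ord (wo U) (m, mu) (m, p)) by (right; split; auto).
        pose (r0 := einv (m, mu)). assert (Er0 : e r0 = (m, mu)) by (apply Hei; auto).
        clearbody r0.
        assert (Hb : forall q, ord (wo U) (kmin, q) (m, p)) by (intros; left; auto).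
        assert (Pr0 : proper_pos v r0).
        { exists (einv (kmin, mu)). apply (E1 _ _ I I). rewrite Er0 Hei; auto. left; auto. }
        assert (Puv : pre u v).
        { exists (fun q => einv (kmin, q)); split; [|split].
          - intros q q' _ _. rewrite (E1 _ _ I I) !Hei; auto. simpl; unfold pow_ord; simpl.
            split; auto. intros [H|[_ H]]; auto. irr_tac.
          - intros q _. rewrite <- (E2 _ I), Hei; auto.
          - intros q t _ Ht. apply (E1 _ _ I I) in Ht. rewrite Hei in Ht; auto.
            destruct (e t) as [k' q'] eqn:Et. destruct Ht as [H|[Ek H]]; simpl in *.
            + destruct (Hkmin k' I H).
            + subst. exists q'; split; auto. apply Einj. rewrite Et Hei; auto. }
        assert (Fz : forall z : car (wo (suffix v r0)), e (proj1_sig z) = (m, snd (e (proj1_sig z)))).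
        { intro z. pose proof (Im1 (proj1_sig z)) as H1.
          assert (H2 : e (proj1_sig z) = (m, mu) \/ ord (wo U) (m, mu) (e (proj1_sig z))).
          { destruct (proj2_sig z) as [E|H]; [left; rewrite E; auto|right; rewrite <- Er0; apply E1; auto]. }
          destruct (e (proj1_sig z)) as [k q]. simpl.
          destruct H2 as [H2|[H2|[Ek H2]]]; simpl in *.
          - inversion H2; auto.
          - destruct H1 as [H1|[Ek H1]]; simpl in *; [destruct (wo_asym WOm H1 H2)|subst; irr_tac].
          - subst; auto. }
        apply (tail_contra u v r0 Wu Wv Pv N Puv Pr0). left.
        exists (fun z => snd (e (proj1_sig z))); split; [|split].
        -- intros z z' _ _. change (ord (wo v) (proj1_sig z) (proj1_sig z') <->
              ord (wo u) (snd (e (proj1_sig z))) (snd (e (proj1_sig z')))).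
           rewrite (E1 _ _ I I) (Fz z) (Fz z'). simpl; unfold pow_ord; simpl.
           split; auto. intros [H|[_ H]]; auto. irr_tac.
        -- intros z _. change (lab u (snd (e (proj1_sig z))) = lab v (proj1_sig z)).
           rewrite <- (E2 _ I), (Fz z). auto.
        -- intros z q _ Hq. assert (Hmq : ord (wo U) (m, q) (e (proj1_sig z))) by (rewrite (Fz z); right; auto).
           destruct (E3 _ _ I Hmq) as [r' [_ Er']].
           assert (Mr : r' = r0 \/ ord (wo v) r0 r').
           { destruct (wo_tot Wu q mu) as [H|[H|H]]; [destruct (Hmu q H)|left; subst; apply Einj; rewrite Er' Er0; auto|].
             right. apply (E1 _ _ I I). rewrite Er0 Er'. right; auto. }
           exists (into_s v r0 r'); split; auto. rewrite into_s_val; auto. rewrite Er'; auto.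
      * apply (luv_contra u v Wu Wv Luv N). left.
        assert (Fr : forall r, e r = (m, snd (e r))).
        { intro r. pose proof (Im1 r) as H1. destruct (e r) as [k q]. simpl.
          destruct H1 as [H1|[Ek H1]]; simpl in *; [destruct (NK (ex_intro _ k H1))|subst; auto]. }
        exists (fun r => snd (e r)); split; [|split].
        -- intros r r' _ _. rewrite (E1 _ _ I I) (Fr r) (Fr r'). simpl; unfold pow_ord; simpl.
           split; auto. intros [H|[_ H]]; auto. irr_tac.
        -- intros r _. rewrite <- (E2 _ I), (Fr r). auto.
        -- intros r q _ Hq. assert (Hmq : ord (wo U) (m, q) (e r)) by (rewrite (Fr r); right; auto).
           destruct (E3 _ _ I Hmq) as [r' [_ Er']]. exists r'; split; auto. rewrite Er'; auto.
  -
    destruct S as [x [r [phi [Ag L]]]]. change (car Om * car (wo u))%type in x. destruct x as [m p1].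
    destruct (shape u v Om m p1 r phi mu Wu Wv WOm Hmu Ag) as [r0 [S1 [S2 [Ag3 Vr]]]].
    pose proof Ag as [A1 [A2 [A3 A4]]].
    pose (K := sub Om (fun k => ord Om k m)).
    assert (Hin : forall (k : car K) q, ord (wo U) (proj1_sig k, q) (m, p1)) by (intros; left; exact (proj2_sig k)).
    exists K, (fun x => phi (proj1_sig x.1, x.2)), r0; split; [apply WO_sub; auto|].
    split; [|split; [|split; [|split]]].
    + intros [k q] [k' q']. simpl. rewrite <- (A1 _ _ (Hin k q) (Hin k' q')). apply pow_eq_sub.
    + intros [k q]. simpl. rewrite (A2 _ (Hin k q)). auto.
    + intros [k q]. simpl. apply S1. exact (proj2_sig k).
    + intros t Ht. destruct (S2 t Ht) as [k [q [Hk E]]].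
      exists (exist (fun k => ord Om k m) k Hk, q); auto.
    + exists p1, (into_s v r0 r), (fun q => into_s v r0 (phi (m, q))); split; auto.
      change ((lab u p1 < lab v (proj1_sig (into_s v r0 r)))%O). rewrite Vr. exact L.
  -
    exfalso. destruct S as [r [x [phi [Ag L]]]]. change (car Om * car (wo u))%type in x. destruct x as [m p].
    destruct (agree_sym Wv WU Ag) as [psi Ag2].
    destruct (shape u v Om m p r psi mu Wu Wv WOm Hmu Ag2) as [r0 [S1 [S2 [Ag3 Vr]]]].
    assert (Ws : WO (wo (suffix v r0))) by (apply WO_suffix; auto).
    destruct (agree_sym Wu Ws Ag3) as [G Ag4].
    assert (Ssu : strp (suffix v r0) u).
    { exists (into_s v r0 r), p, G; split; auto.
      change ((lab v (proj1_sig (into_s v r0 r)) < lab u p)%O). rewrite Vr. exact L. }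
    destruct (classic (exists k, ord Om k m)) as [HK|NK].
    + pose proof (Kmin m HK) as Hkm. pose proof Ag2 as [B1 [B2 [B3 B4]]].
      assert (Hb : forall q, ord (wo U) (kmin, q) (m, p)) by (intros; left; auto).
      assert (Puv : pre u v).
      { exists (fun q => psi (kmin, q)); split; [|split].
        - intros q q' _ _. rewrite <- (B1 _ _ (Hb q) (Hb q')). simpl; unfold pow_ord; simpl.
          split; auto. intros [H|[_ H]]; auto. irr_tac.
        - intros q _. rewrite (B2 _ (Hb q)). auto.
        - intros q t _ Ht. destruct (B4 t (wo_trans Wv Ht (B3 _ (Hb q)))) as [[k' q'] [Hx Ex]].
          subst t. apply (B1 _ _ Hx (Hb q)) in Ht. destruct Ht as [H|[Ek H]]; simpl in *.
          + destruct (Hkmin k' I H).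
          + subst. exists q'; split; auto. }
      apply (tail_contra u v r0 Wu Wv Pv N Puv). exists (psi (kmin, mu)); apply S1; auto.
      right; exact Ssu.
    + apply (luv_contra u v Wu Wv Luv N). right.
      apply (str_pre Ws Wu Wv Wu Ssu); [|apply pre_refl].
      exists (fun z => proj1_sig z); split; [|split]; try (intros; simpl; tauto).
      intros z t _ Ht. assert (Mt : t = r0 \/ ord (wo v) r0 t).
      { destruct (wo_tot Wv t r0) as [H|[H|H]]; auto.
        destruct (S2 t H) as [k [q [Hk _]]]. destruct (NK (ex_intro _ k Hk)). }
      exists (into_s v r0 t); split; auto. apply into_s_val; auto.
Qed.

End W3.

Section W4.
Context {d : Order.disp_t} {A : finOrderType d}.
Ltac dem := match goal with |- context [excluded_middle_informative ?P] =>
  let H := fresh "EM" in destruct (excluded_middle_informative P) as [H|H] end.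
Ltac irr_tac := match goal with H : ord ?O ?a ?a |- _ =>
  exfalso; apply (@wo_irr O ltac:(assumption) a H) end.

Lemma pre_suffix_map (x x' : word A) gg (E : car (wo x) -> car (wo x')) :
  WO (wo x) -> WO (wo x') ->
  (forall p q, ord (wo x) p q <-> ord (wo x') (E p) (E q)) ->
  (forall p, lab x' (E p) = lab x p) ->
  (forall s t', (s = gg \/ ord (wo x) gg s) -> (t' = E gg \/ ord (wo x') (E gg) t') ->
      ord (wo x') t' (E s) -> exists s', E s' = t') ->
  pre (suffix x gg) (suffix x' (E gg)).
Proof.
  intros Wx Wx' E1 E2 E3.
  assert (Mem : forall z : car (wo (suffix x gg)), E (proj1_sig z) = E gg \/ ord (wo x') (E gg) (E (proj1_sig z))).
  { intro z. destruct (proj2_sig z) as [H|H]; [left; rewrite H; auto|right; apply E1; auto]. }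
  exists (fun z => into_s x' (E gg) (E (proj1_sig z))); split; [|split].
  - intros z1 z2 _ _. change (ord (wo x) (proj1_sig z1) (proj1_sig z2) <->
      ord (wo x') (proj1_sig (into_s x' (E gg) (E (proj1_sig z1)))) (proj1_sig (into_s x' (E gg) (E (proj1_sig z2))))).
    rewrite (into_s_val _ _ _ (Mem z1)) (into_s_val _ _ _ (Mem z2)). apply E1.
  - intros z _. change (lab x' (proj1_sig (into_s x' (E gg) (E (proj1_sig z)))) = lab x (proj1_sig z)).
    rewrite (into_s_val _ _ _ (Mem z)). auto.
  - intros z z2 _ Hz. change (ord (wo x') (proj1_sig z2) (proj1_sig (into_s x' (E gg) (E (proj1_sig z))))) in Hz.
    rewrite (into_s_val _ _ _ (Mem z)) in Hz.
    destruct (E3 (proj1_sig z) (proj1_sig z2) (proj2_sig z) (proj2_sig z2) Hz) as [s Es].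
    assert (Ms : s = gg \/ ord (wo x) gg s).
    { destruct (proj2_sig z2) as [H|H].
      - left. rewrite <- Es in H. destruct (wo_tot Wx s gg) as [H'|[H'|H']]; auto.
        + apply E1 in H'. rewrite H in H'. irr_tac.
        + apply E1 in H'. rewrite H in H'. irr_tac.
      - right. rewrite <- Es in H. apply E1; auto. }
    exists (into_s x gg s); split; auto. apply sig_eq.
    assert (M2 : E (proj1_sig (into_s x gg s)) = E gg \/ ord (wo x') (E gg) (E (proj1_sig (into_s x gg s)))).
    { apply Mem. }
    rewrite (into_s_val _ _ _ M2) (into_s_val _ _ _ Ms). auto.
Qed.

Lemma pre_min_suffix (x : word A) m : WO (wo x) -> (forall t, ~ ord (wo x) t m) -> pre x (suffix x m).
Proof.
  intros Wx Hm.
  assert (Mem : forall t, t = m \/ ord (wo x) m t).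
  { intro t. destruct (wo_tot Wx t m) as [H|[H|H]]; auto. destruct (Hm t H). }
  exists (fun t => into_s x m t); split; [|split].
  - intros p q _ _. change (ord (wo x) p q <-> ord (wo x) (proj1_sig (into_s x m p)) (proj1_sig (into_s x m q))).
    rewrite (into_s_val _ _ _ (Mem p)) (into_s_val _ _ _ (Mem q)); tauto.
  - intros p _. change (lab x (proj1_sig (into_s x m p)) = lab x p). rewrite (into_s_val _ _ _ (Mem p)); auto.
  - intros p z _ _. exists (proj1_sig z); split; auto. apply into_s_id.
Qed.

Lemma pre_suffix_surj (x : word A) p e : WO (wo x) ->
  emb x (suffix x p) (fun _ => True) e -> forall z, exists q, e q = z.
Proof.
  intros Wx [E1 [E2 E3]].
  assert (Mono : forall q q', ord (wo x) q q' -> ord (wo x) (proj1_sig (e q)) (proj1_sig (e q'))).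
  { intros q q' H. apply (E1 q q' I I) in H. exact H. }
  pose proof (selfemb (fun q => proj1_sig (e q)) Wx Mono) as Se.
  intro z. destruct (wo_tot Wx (proj1_sig (e (proj1_sig z))) (proj1_sig z)) as [H|[H|H]].
  - destruct (Se _ H).
  - exists (proj1_sig z). apply sig_eq; auto.
  - destruct (E3 (proj1_sig z) z I H) as [q [_ Eq]]. eauto.
Qed.

Definition lcat (a b : lorder) : lorder :=
  @LOrder (car a + car b) (cat_ord a b) (cat_enc a b).

Lemma WO_lcat (a b : lorder) (c : A) : WO a -> WO b -> WO (lcat a b).
Proof. intros Wa Wb. exact (WO_cat (cw a c) (cw b c) Wa Wb). Qed.

Definition psi_pre (u v : word A) (al K : lorder) (phi : car K * car (wo u) -> car (wo v))
  (x : car (lcat al K) * car (wo u)) : car (wo (wcat (wpow u al) v)) :=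
  match x.1 with inl i => inl (i, x.2) | inr k => inr (phi (k, x.2)) end.

Lemma coreH_prepend (u v : word A) al K phi r0 : WO (wo u) -> WO (wo v) -> WO al -> WO K ->
  CoreH v u K phi r0 ->
  CoreH (wcat (wpow u al) v) u (lcat al K) (psi_pre u v al K phi) (inr r0).
Proof.
  intros Wu Wv Wa WK [C1 [C2 [C3 [C4 C5]]]].
  split; [|split; [|split; [|split]]].
  - intros [[i|k] p] [[i'|k'] p']; simpl; unfold pow_ord; simpl.
    + split; intros [H|[E H]]; auto; right; split; auto; [inversion E|subst]; auto.
    + split; auto.
    + split; [intros [H|[E H]]; [auto|discriminate]|tauto].
    + rewrite <- C1. simpl; unfold pow_ord; simpl.
      split; intros [H|[E H]]; auto; right; split; auto; [inversion E|subst]; auto.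
  - intros [[i|k] p]; simpl; auto; apply C2.
  - intros [[i|k] p]; simpl; auto.
  - intros [[i p]|q] Ht; simpl in Ht.
    + exists (inl i, p); unfold psi_pre; auto.
    + destruct (C4 q Ht) as [[k p] E]. exists (inr k, p). unfold psi_pre; simpl. rewrite E; auto.
  - assert (WW : WO (wo (wcat (wpow u al) v))) by (apply WO_cat; [apply WO_pow|]; auto).
    apply (str_pre Wu (WO_suffix _ _ Wv) Wu (WO_suffix _ _ WW) C5 (pre_refl _)).
    apply (pre_suffix_map v (wcat (wpow u al) v) r0 (fun q => inr q) Wv WW); simpl; try tauto.
    intros s [[i p]|q] _ Ht H; simpl in *; [destruct Ht as [Ht|Ht]; [discriminate|contradiction]|eauto].
Qed.


Lemma pow_suffix_pre (W y : word A) (de : lorder) f g ym d' :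
  WO (wo W) -> WO (wo y) -> WO de -> (forall q, ~ ord (wo y) q ym) ->
  (forall p, g (f p) = p) -> (forall q, f (g q) = q) ->
  (forall p q, ord (wo W) p q <-> ord (wo (wpow y de)) (f p) (f q)) ->
  (forall p, lab (wpow y de) (f p) = lab W p) ->
  pre (suffix W (g (d', ym))) W.
Proof.
  intros WW Wy Wd Hym F1 F2 F3 F4.
  assert (WP : WO (wo (wpow y de))) by (apply WO_pow; auto).
  destruct (L_final de (lab y ym) d' Wd) as [h [H1 H2]].
  pose proof (h_inj Wd H1) as Hinj.
  assert (Gi : forall a b, ord (wo (wpow y de)) a b <-> ord (wo W) (g a) (g b)) by (intros; rewrite F3 !F2; tauto).
  assert (Gl : forall a, lab W (g a) = lab (wpow y de) a) by (intros; rewrite <- F4, F2; auto).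
  assert (Key : forall z : car (wo (suffix W (g (d', ym)))), ge de d' (f (proj1_sig z)).1).
  { intro z. destruct (proj2_sig z) as [E|H].
    - rewrite E F2. left; auto.
    - apply F3 in H. rewrite F2 in H. destruct (f (proj1_sig z)) as [k p].
      destruct H as [H|[E H]]; simpl in *; [right|left]; auto. }
  exists (fun z => g (h (f (proj1_sig z)).1, (f (proj1_sig z)).2)); split; [|split].
  - intros z z' _ _. change (ord (wo W) (proj1_sig z) (proj1_sig z') <->
       ord (wo W) (g (h (f (proj1_sig z)).1, (f (proj1_sig z)).2)) (g (h (f (proj1_sig z')).1, (f (proj1_sig z')).2))).
    rewrite F3 -Gi. pose proof (Key z) as K1. pose proof (Key z') as K2.
    destruct (f (proj1_sig z)) as [k p]. destruct (f (proj1_sig z')) as [k' p']. simpl in *.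
    unfold pow_ord; simpl. rewrite (H1 _ _ K1 K2).
    split; intros [H|[E H]].
    + left; auto.
    + right; subst; auto.
    + left; auto.
    + right; split; auto.
  - intros z _. change (lab W (g (h (f (proj1_sig z)).1, (f (proj1_sig z)).2)) = lab W (proj1_sig z)).
    rewrite Gl -F4. destruct (f (proj1_sig z)); simpl; auto.
  - intros z t _ Ht. rewrite <- (F1 t) in Ht. apply Gi in Ht.
    pose proof (Key z) as K1. destruct (f (proj1_sig z)) as [k p]. simpl in K1.
    destruct (f t) as [j p'] eqn:Et.
    assert (Hk : exists k'', ge de d' k'' /\ h k'' = j).
    { destruct Ht as [H|[E H]]; simpl in *; [apply (H2 k); auto|exists k; auto]. }
    destruct Hk as [k'' [G E]].
    assert (Mt : g (k'', p') = g (d', ym) \/ ord (wo W) (g (d', ym)) (g (k'', p'))).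
    { destruct G as [G|G].
      - subst k''. destruct (wo_tot Wy p' ym) as [H|[H|H]]; [destruct (Hym _ H)|subst; left; auto|].
        right; apply Gi; right; simpl; auto.
      - right; apply Gi; left; auto. }
    exists (into_s W (g (d', ym)) (g (k'', p'))); split; auto.
    rewrite (into_s_val _ _ _ Mt) F2. simpl. rewrite E -Et F1. auto.
Qed.

End W4.

Section W5.
Context {d : Order.disp_t} {A : finOrderType d}.
Ltac dem := match goal with |- context [excluded_middle_informative ?P] =>
  let H := fresh "EM" in destruct (excluded_middle_informative P) as [H|H] end.
Ltac irr_tac := match goal with H : ord ?O ?a ?a |- _ =>
  exfalso; apply (@wo_irr O ltac:(assumption) a H) end.

Lemma selfemb_surj (x : word A) E : WO (wo x) -> emb x x (fun _ => True) E ->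
  forall t, exists s, E s = t.
Proof.
  intros Wx [E1 [E2 E3]].
  assert (Mono : forall p q, ord (wo x) p q -> ord (wo x) (E p) (E q)) by (intros p q H; apply (E1 p q I I); exact H).
  pose proof (selfemb E Wx Mono) as Se.
  intro t. destruct (wo_tot Wx (E t) t) as [H|[H|H]].
  - destruct (Se _ H).
  - eauto.
  - destruct (E3 t t I H) as [s [_ Es]]; eauto.
Qed.

Lemma min_ex (O : lorder) (o : car O) : WO O -> exists m, forall q, ~ ord O q m.
Proof.
  intro W. destruct (wf_min (fun _ => True) W (ex_intro _ o I)) as [m [_ H]].
  exists m; intros q; apply H; auto.
Qed.

Lemma main_sec (u v : word A) (al : lorder) :
  is_word u -> is_word v -> prime_word u -> prime_word v ->
  lex_lt u v -> is_ord al -> lex_lt (wcat (wpow u al) v) v ->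
  forall be : lorder, is_ord be -> inhabited (car be) ->
  prime_word (wcat (wpow u al) (wpow v be)).
Proof.
  intros iu iv Pu Pv Luv ia Lw be ib [b_].
  pose proof (is_ord_WO iu) as Wu. pose proof (is_ord_WO iv) as Wv.
  pose proof (is_ord_WO ia) as Wa. pose proof (is_ord_WO ib) as Wb.
  assert (WW' : WO (wo (wcat (wpow u al) v))) by (apply WO_cat; [apply WO_pow|]; auto).
  assert (Ww : WO (wo (wcat (wpow u al) (wpow v be)))) by (apply WO_cat; apply WO_pow; auto).
  destruct (prime_inh u iu Pu) as [u0]. destruct (min_ex _ u0 Wu) as [mu Hmu].
  destruct (prime_inh v iv Pv) as [v0]. destruct (min_ex _ v0 Wv) as [mv Hmv].
  destruct (min_ex _ b_ Wb) as [b0 Hb0].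
  destruct Luv as [L1 N1].
  assert (L1' : pre u v \/ strp u v).
  { destruct L1 as [H|H]; [left; apply wprefix_pre; auto|right; apply (str_iff _ _ Wu Wv); auto]. }
  destruct Lw as [_ Nw].
  destruct (classic (inhabited (car al))) as [[a_]|Na].
  2:{ exfalso; apply Nw; apply word_eq_sym.
      apply (@mk_eq _ _ v (wcat (wpow u al) v) (fun q => inr q) Wv WW').
      - intros; simpl; tauto.
      - auto.
      - intros [[i p]|q]; [destruct (Na (inhabits i))|exists q; auto]. }
  destruct (min_ex _ a_ Wa) as [a0 Ha0].
  destruct (factor u v mu iu iv Pv L1' N1 Hmu) as [K [phi [r0 [WK CH]]]].
  assert (WT : WO (lcat al K)) by exact (WO_lcat al K (lab u mu) Wa WK).
  pose proof (coreH_prepend u v al K phi r0 Wu Wv Wa WK CH) as CH'.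
  pose (E := fun x : car (wo (wcat (wpow u al) v)) =>
    match x return car (wo (wcat (wpow u al) (wpow v be))) with
    | inl y => inl y | inr q => inr (b0, q) end).
  assert (HE : emb (wcat (wpow u al) v) (wcat (wpow u al) (wpow v be)) (fun _ => True) E).
  { split; [|split].
    - intros [[i p]|q] [[i' p']|q'] _ _; simpl; try tauto. unfold pow_ord; simpl.
      split; auto. intros [H|[_ H]]; auto. irr_tac.
    - intros [[i p]|q] _; simpl; auto.
    - intros [[i p]|q] [[i' p']|[j q']] _ Ht; simpl in Ht; try contradiction.
      + exists (inl (i', p')); auto.
      + exists (inl (i', p')); auto.
      + destruct Ht as [H|[Ej H]]; simpl in *; [destruct (Hb0 _ H)|subst].
        exists (inr q'); auto. }
  pose proof (coreH_pre _ _ u (lcat al K) _ _ E WW' Ww WT Wu CH' HE) as CHw.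
  assert (Heqv : word_eq v (suffix (wcat (wpow u al) v) (inr mv))).
  { assert (Mem : forall q, (inr q : car (wo (wcat (wpow u al) v))) = inr mv \/
                     ord (wo (wcat (wpow u al) v)) (inr mv) (inr q)).
    { intro q. destruct (wo_tot Wv q mv) as [H|[H|H]]; [destruct (Hmv _ H)|left; subst; auto|right; exact H]. }
    apply (@mk_eq _ _ v (suffix (wcat (wpow u al) v) (inr mv))
      (fun q => into_s (wcat (wpow u al) v) (inr mv) (inr q)) Wv (WO_suffix _ _ WW')).
    - intros p q. change (ord (wo v) p q <-> ord (wo (wcat (wpow u al) v))
         (proj1_sig (into_s (wcat (wpow u al) v) (inr mv) (inr p))) (proj1_sig (into_s (wcat (wpow u al) v) (inr mv) (inr q)))).
      rewrite (into_s_val _ _ _ (Mem p)) (into_s_val _ _ _ (Mem q)). simpl; tauto.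
    - intros q. change (lab (wcat (wpow u al) v) (proj1_sig (into_s (wcat (wpow u al) v) (inr mv) (inr q))) = lab v q).
      rewrite (into_s_val _ _ _ (Mem q)). auto.
    - intros [[[i p]|q] Hz].
      + exfalso. destruct Hz as [Hz|Hz]; [discriminate|exact Hz].
      + exists q. apply sig_eq. rewrite (into_s_val _ _ _ (Mem q)). auto. }
  assert (Cl : word_eq (wcat (wpow u al) v) (suffix (wcat (wpow u al) v) (inr mv)) \/
               strp (wcat (wpow u al) v) (suffix (wcat (wpow u al) v) (inr mv))).
  { pose proof CH as [C1 [C2 [C3 [C4 C5]]]].
    destruct (classic (inhabited (car K))) as [[k_]|NK].
    - destruct (min_ex _ k_ WK) as [kmin Hkmin].
      assert (Emv : phi (kmin, mu) = mv).
      { assert (Mn : forall q, ~ ord (wo v) q (phi (kmin, mu))).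
        { intros q Hq. destruct (C4 q (wo_trans Wv Hq (C3 _))) as [[k p] Ek]. subst q.
          apply C1 in Hq. destruct Hq as [H|[_ H]]; simpl in *; [exact (Hkmin _ H)|exact (Hmu _ H)]. }
        destruct (wo_tot Wv (phi (kmin, mu)) mv) as [H|[H|H]]; auto; [destruct (Hmv _ H)|destruct (Mn _ H)]. }
      pose proof (core1 _ u _ _ _ mu WW' WT Wu CH' Hmu (inr kmin)) as R.
      unfold psi_pre in R; simpl in R. rewrite Emv in R. exact R.
    - assert (Er : r0 = mv).
      { destruct (wo_tot Wv r0 mv) as [H|[H|H]]; auto; [destruct (Hmv _ H)|].
        destruct (C4 _ H) as [[k p] _]. destruct (NK (inhabits k)). }
      right. pose proof (core2 _ u _ _ _ WW' WT Wu CH' (inhabits (inl a0))) as R.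
      rewrite Er in R. exact R. }
  assert (SW'v : strp (wcat (wpow u al) v) v).
  { destruct Cl as [Eq|S].
    - exfalso; apply Nw. exact (word_eq_trans _ _ _ Eq (word_eq_sym _ _ Heqv)).
    - exact (str_pre WW' (WO_suffix _ _ WW') WW' Wv S (pre_refl _) (eq_pre _ _ (word_eq_sym _ _ Heqv))). }
  assert (PW'w : pre (wcat (wpow u al) v) (wcat (wpow u al) (wpow v be))) by (exists E; exact HE).
  assert (PBr : forall j q, strp (wcat (wpow u al) (wpow v be)) (suffix (wcat (wpow u al) (wpow v be)) (inr (j, q)))).
  { intros j q.
    assert (WZ : WO (wo (suffix (wcat (wpow u al) (wpow v be)) (inr (j, q))))) by (apply WO_suffix; auto).
    assert (V1 : pre v (suffix v q) \/ strp v (suffix v q)).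
    { destruct (classic (q = mv)) as [Eq|Nq]; [left; subst; apply pre_min_suffix; auto|].
      assert (Hp : proper_pos v q).
      { exists mv. destruct (wo_tot Wv mv q) as [H|[H|H]]; [auto|subst; contradiction|destruct (Hmv _ H)]. }
      destruct Pv as [_ Pv2]. destruct (Pv2 q Hp) as [H|H];
        [left; apply wprefix_pre; auto|right; apply (str_iff _ _ Wv (WO_suffix _ _ Wv)); auto]. }
    assert (V2 : pre (suffix v q) (suffix (wcat (wpow u al) (wpow v be)) (inr (j, q)))).
    { apply (pre_suffix_map v (wcat (wpow u al) (wpow v be)) q (fun q' => inr (j, q')) Wv Ww).
      - intros p p'. simpl; unfold pow_ord; simpl. split; [right; auto|intros [H|[_ H]]; [irr_tac|auto]].
      - intros p; simpl; auto.
      - intros s [[i p]|[j' q']] Hs Ht Hlt; simpl in *.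
        + destruct Ht as [Ht|Ht]; [discriminate|contradiction].
        + unfold pow_ord in *; simpl in *.
          assert (Ej : j' = j).
          { destruct Ht as [Ht|[Ht|[Ht _]]]; [inversion Ht; auto| |auto].
            destruct Hlt as [Hlt|[Hlt _]]; [destruct (wo_asym Wb Ht Hlt)|subst; irr_tac]. }
          subst j'. exists q'; auto. }
    destruct V1 as [H|H].
    - apply (str_pre WW' WZ Ww WZ); [|exact PW'w|apply pre_refl].
      exact (str_pre WW' Wv WW' WZ SW'v (pre_refl _) (pre_trans H V2)).
    - apply (str_pre WW' WZ Ww WZ); [|exact PW'w|apply pre_refl].
      apply (str_trans WW' Wv WZ SW'v).
      exact (str_pre Wv (WO_suffix _ _ Wv) Wv WZ H (pre_refl _) V2). }
  assert (PBl : forall i p, pre (wcat (wpow u al) (wpow v be)) (suffix (wcat (wpow u al) (wpow v be)) (inl (i, p))) \/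
                            strp (wcat (wpow u al) (wpow v be)) (suffix (wcat (wpow u al) (wpow v be)) (inl (i, p)))).
  { intros i p.
    assert (WZ : WO (wo (suffix (wcat (wpow u al) (wpow v be)) (inl (i, p))))) by (apply WO_suffix; auto).
    assert (WZ0 : WO (wo (suffix (wcat (wpow u al) (wpow v be)) (inl (i, mu))))) by (apply WO_suffix; auto).
    pose proof (core1 _ u _ _ _ mu Ww WT Wu CHw Hmu (inl i)) as C0.
    unfold psi_pre in C0; simpl in C0.
    destruct (classic (p = mu)) as [Ep|Np].
    { subst p. destruct C0 as [C0|C0]; [left; apply eq_pre|right]; auto. }
    assert (Hp : proper_pos u p).
    { exists mu. destruct (wo_tot Wu mu p) as [H|[H|H]]; [auto|subst; contradiction|destruct (Hmu _ H)]. }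
    destruct Pu as [_ Pu2]. destruct (Pu2 p Hp) as [H|H].
    - apply wprefix_pre in H. destruct H as [e He].
      pose proof (pre_suffix_surj u p e Wu He) as Surj.
      pose proof He as [He1 [He2 He3]].
      assert (Ep : proj1_sig (e mu) = p).
      { destruct (proj2_sig (e mu)) as [H|H]; auto. exfalso.
        assert (H' : ord (wo (suffix u p)) (into_s u p p) (e mu)).
        { change (ord (wo u) (proj1_sig (into_s u p p)) (proj1_sig (e mu))). rewrite into_s_val; auto. }
        destruct (He3 mu _ I H') as [q [_ Eq]]. rewrite <- Eq in H'. apply He1 in H'; auto. exact (Hmu _ H'). }
      pose (F := fun x : car (wo (wcat (wpow u al) (wpow v be))) =>
        match x return car (wo (wcat (wpow u al) (wpow v be))) with
        | inl (j, q) => if excluded_middle_informative (j = i) then inl (i, proj1_sig (e q)) else inl (j, q)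
        | inr y => inr y end).
      assert (Fi : forall j q, j = i -> F (inl (j, q)) = inl (i, proj1_sig (e q))).
      { intros j q Ej. unfold F. dem; auto. contradiction. }
      assert (Fo : forall j q, j <> i -> F (inl (j, q)) = inl (j, q)).
      { intros j q Ej. unfold F. dem; auto. contradiction. }
      assert (Fr : forall y, F (inr y) = inr y) by auto.
      clearbody F.
      assert (Me : forall q q', ord (wo u) q q' <-> ord (wo u) (proj1_sig (e q)) (proj1_sig (e q'))).
      { intros q q'. apply (He1 q q' I I). }
      assert (Pre0 : pre (suffix (wcat (wpow u al) (wpow v be)) (inl (i, mu)))
                         (suffix (wcat (wpow u al) (wpow v be)) (F (inl (i, mu))))).
      { apply (pre_suffix_map (wcat (wpow u al) (wpow v be)) (wcat (wpow u al) (wpow v be)) (inl (i, mu)) F Ww Ww).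
        - intros [[j q]|y] [[j' q']|y'].
          + destruct (classic (j = i)) as [Hj|Hj]; [rewrite (Fi _ _ Hj)|rewrite (Fo _ _ Hj)];
            (destruct (classic (j' = i)) as [Hj'|Hj']; [rewrite (Fi _ _ Hj')|rewrite (Fo _ _ Hj')]);
            try subst j; try subst j'; simpl; unfold pow_ord; simpl.
            * subst. rewrite (Me q q'). tauto.
            * split; intros [H|[Ee H]]; [left; exact H|exfalso; congruence|left; exact H|exfalso; congruence].
            * split; intros [H|[Ee H]]; [left; exact H|exfalso; congruence|left; exact H|exfalso; congruence].
            * tauto.
          + destruct (classic (j = i)) as [Hj|Hj]; [rewrite (Fi _ _ Hj)|rewrite (Fo _ _ Hj)]; rewrite Fr; simpl; tauto.
          + destruct (classic (j' = i)) as [Hj|Hj]; [rewrite (Fi _ _ Hj)|rewrite (Fo _ _ Hj)]; rewrite Fr; simpl; tauto.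
          + rewrite !Fr; tauto.
        - intros [[j q]|y]; rewrite ?Fr; auto.
          destruct (classic (j = i)) as [Hj|Hj]; [rewrite (Fi _ _ Hj)|rewrite (Fo _ _ Hj)]; auto.
          simpl. rewrite <- (He2 q I). auto.
        - intros s t' _ Ht' _. rewrite (Fi _ _ (Logic.eq_refl i)) Ep in Ht'.
          destruct t' as [[j q]|y].
          + destruct (classic (j = i)) as [Hj|Hj].
            * subst j. assert (Mq : q = p \/ ord (wo u) p q).
              { destruct Ht' as [Ht'|[Ht'|[_ Ht']]]; simpl in *; [inversion Ht'; auto|irr_tac|auto]. }
              destruct (Surj (into_s u p q)) as [q0 Eq0].
              exists (inl (i, q0)). rewrite (Fi _ _ (Logic.eq_refl i)) Eq0 into_s_val; auto.
            * exists (inl (j, q)). apply Fo; auto.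
          + exists (inr y); auto. }
      rewrite (Fi _ _ (Logic.eq_refl i)) Ep in Pre0.
      destruct C0 as [Eq|S].
      + left. exact (pre_trans (eq_pre _ _ Eq) Pre0).
      + right. exact (str_pre Ww WZ0 Ww WZ S (pre_refl _) Pre0).
    - apply (str_iff _ _ Wu (WO_suffix _ _ Wu)) in H. right.
      assert (Pu0 : pre u (wcat (wpow u al) (wpow v be))).
      { exists (fun q => inl (a0, q)); split; [|split].
        - intros q q' _ _; simpl; unfold pow_ord; simpl. split; [right; auto|intros [H0|[_ H0]]; [irr_tac|auto]].
        - intros q _; simpl; auto.
        - intros q [[j q']|y] _ Ht; simpl in Ht; [|contradiction].
          destruct Ht as [Ht|[Ej Ht]]; simpl in *; [destruct (Ha0 _ Ht)|subst].
          exists q'; auto. }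
      assert (Pus : pre (suffix u p) (suffix (wcat (wpow u al) (wpow v be)) (inl (i, p)))).
      { apply (pre_suffix_map u (wcat (wpow u al) (wpow v be)) p (fun q => inl (i, q)) Wu Ww).
        - intros q q'. simpl; unfold pow_ord; simpl. split; [right; auto|intros [H0|[_ H0]]; [irr_tac|auto]].
        - intros q; simpl; auto.
        - intros s [[j q]|y] Hs Ht Hlt; simpl in *; [|contradiction].
          unfold pow_ord in *; simpl in *.
          assert (Ej : j = i).
          { destruct Ht as [Ht|[Ht|[Ht _]]]; [inversion Ht; auto| |auto].
            destruct Hlt as [Hlt|[Hlt _]]; [destruct (wo_asym Wa Ht Hlt)|subst; irr_tac]. }
          subst j. exists q; auto. }
      exact (str_pre Wu (WO_suffix _ _ Wu) Ww WZ H Pu0 Pus). }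
  split.
  -
    intros y de iy id Heq. pose proof (is_ord_WO iy) as Wy. pose proof (is_ord_WO id) as Wd.
    pose proof Heq as [f [g [F1 [F2 [F3 F4]]]]].
    assert (WP : WO (wo (wpow y de))) by (apply WO_pow; auto).
    pose (x0 := (inr (b0, mv) : car (wo (wcat (wpow u al) (wpow v be))))).
    destruct (min_ex _ (f x0).2 Wy) as [ym Hym].
    destruct (min_ex _ (f x0).1 Wd) as [d0 Hd0].
    assert (Gi : forall a b, ord (wo (wpow y de)) a b <-> ord (wo (wcat (wpow u al) (wpow v be))) (g a) (g b))
      by (intros; rewrite F3 !F2; tauto).
    assert (Gl : forall a, lab (wcat (wpow u al) (wpow v be)) (g a) = lab (wpow y de) a)
      by (intros; rewrite <- F4, F2; auto).
    destruct (classic (forall s, s = d0)) as [One|NOne].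
    + split; [exists d0; auto|].
      assert (Hy : word_eq y (wpow y de)).
      { apply (@mk_eq _ _ y (wpow y de) (fun q => (d0, q)) Wy WP).
        - intros q q'; simpl; unfold pow_ord; simpl. split; [right; auto|intros [H|[_ H]]; [irr_tac|auto]].
        - intros q; simpl; auto.
        - intros [dd q]. exists q. rewrite (One dd); auto. }
      exact (word_eq_trans _ _ _ Hy (word_eq_sym _ _ Heq)).
    + exfalso. apply not_all_ex_not in NOne. destruct NOne as [d1 Nd1].
      assert (Hd1 : ord de d0 d1).
      { destruct (wo_tot Wd d0 d1) as [H|[H|H]]; [auto|subst; contradiction|destruct (Hd0 _ H)]. }
      pose proof (fun d' => pow_suffix_pre _ y de f g ym d' Ww Wy Wd Hym F1 F2 F3 F4) as PS.
      destruct (classic (exists dm, forall dd, dd = dm \/ ord de dd dm)) as [[dm Hdm]|NM].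
      * assert (PBb : pre (wcat (wpow u al) (wpow v be)) (suffix (wcat (wpow u al) (wpow v be)) (g (dm, ym))) \/
                      strp (wcat (wpow u al) (wpow v be)) (suffix (wcat (wpow u al) (wpow v be)) (g (dm, ym)))).
        { destruct (g (dm, ym)) as [[i p]|[j q]]; [apply PBl|right; apply PBr]. }
        assert (WZ : WO (wo (suffix (wcat (wpow u al) (wpow v be)) (g (dm, ym))))) by (apply WO_suffix; auto).
        destruct PBb as [[e1 He1]|Sb]; [|exact (pre_str_contra2 WZ Ww (PS dm) Sb)].
        assert (Fst : forall z : car (wo (suffix (wcat (wpow u al) (wpow v be)) (g (dm, ym)))),
                   f (proj1_sig z) = (dm, (f (proj1_sig z)).2)).
        { intro z. assert (Hz : (dm, ym) = f (proj1_sig z) \/ ord (wo (wpow y de)) (dm, ym) (f (proj1_sig z))).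
          { destruct (proj2_sig z) as [H|H]; [left; rewrite H F2; auto|right; pose proof (proj1 (F3 _ _) H) as H'; rewrite F2 in H'; exact H']. }
          destruct (f (proj1_sig z)) as [k q]. simpl.
          destruct Hz as [Hz|[Hz|[Ek Hz]]]; simpl in *.
          - inversion Hz; auto.
          - destruct (Hdm k) as [Ek|Hk]; [subst; auto|destruct (wo_asym Wd Hz Hk)].
          - subst; auto. }
        assert (He2 : emb (suffix (wcat (wpow u al) (wpow v be)) (g (dm, ym))) y (fun _ => True)
                         (fun z => (f (proj1_sig z)).2)).
        { split; [|split].
          - intros z z' _ _. change (ord (wo (wcat (wpow u al) (wpow v be))) (proj1_sig z) (proj1_sig z') <->
               ord (wo y) (f (proj1_sig z)).2 (f (proj1_sig z')).2).
            rewrite F3 (Fst z) (Fst z'). simpl; unfold pow_ord; simpl.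
            split; [intros [H|[_ H]]; [irr_tac|auto]|right; auto].
          - intros z _. change (lab y (f (proj1_sig z)).2 = lab (wcat (wpow u al) (wpow v be)) (proj1_sig z)).
            rewrite <- F4, (Fst z). auto.
          - intros z q _ Hq.
            assert (Mt : g (dm, q) = g (dm, ym) \/ ord (wo (wcat (wpow u al) (wpow v be))) (g (dm, ym)) (g (dm, q))).
            { destruct (wo_tot Wy q ym) as [H|[H|H]]; [destruct (Hym _ H)|left; subst; auto|].
              right; apply Gi; right; simpl; auto. }
            exists (into_s (wcat (wpow u al) (wpow v be)) (g (dm, ym)) (g (dm, q))); split; auto.
            change ((f (proj1_sig (into_s (wcat (wpow u al) (wpow v be)) (g (dm, ym)) (g (dm, q))))).2 = q). rewrite (into_s_val _ _ _ Mt) F2. auto. }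
        assert (He3 : emb y (wcat (wpow u al) (wpow v be)) (fun _ => True) (fun q => g (d0, q))).
        { split; [|split].
          - intros q q' _ _. rewrite <- Gi. simpl; unfold pow_ord; simpl.
            split; [right; auto|intros [H|[_ H]]; [irr_tac|auto]].
          - intros q _. rewrite Gl. auto.
          - intros q t _ Ht. rewrite <- (F1 t) in Ht. apply Gi in Ht.
            destruct (f t) as [k q'] eqn:Et. destruct Ht as [H|[Ek H]]; simpl in *; [destruct (Hd0 _ H)|subst].
            exists q'; split; auto. rewrite <- Et, F1; auto. }
        pose proof (emb_comp (emb_comp He1 He2 (fun _ _ => I)) He3 (fun _ _ => I)) as EE.
        destruct (selfemb_surj _ _ Ww EE (g (dm, ym))) as [s Es].
        apply (f_equal f) in Es. rewrite !F2 in Es. inversion Es as [Edm].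
        destruct (Hdm d1) as [H9|H9]; subst; [contradiction|destruct (Hd0 _ H9)].
      * set (dd := (f x0).1).
        assert (Hd' : exists d', ord de dd d').
        { apply NNPP; intro N. apply NM. exists dd. intro k.
          destruct (wo_tot Wd k dd) as [H|[H|H]]; auto. exfalso; apply N; eauto. }
        destruct Hd' as [d' Hd'].
        assert (Hx : ord (wo (wcat (wpow u al) (wpow v be))) x0 (g (d', ym))).
        { rewrite <- (F1 x0). apply Gi. left; exact Hd'. }
        assert (SS : strp (wcat (wpow u al) (wpow v be)) (suffix (wcat (wpow u al) (wpow v be)) (g (d', ym)))).
        { revert Hx. unfold x0. destruct (g (d', ym)) as [[i p]|[j q]]; simpl; [contradiction|intros _; apply PBr]. }
        exact (pre_str_contra2 (WO_suffix _ _ Ww) Ww (PS d') SS).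
  - intros [[i p]|[j q]] _.
    + destruct (PBl i p) as [H|H]; [left; apply wprefix_pre; auto|right; apply (str_iff _ _ Ww (WO_suffix _ _ Ww)); auto].
    + right; apply (str_iff _ _ Ww (WO_suffix _ _ Ww)); auto.
Qed.

End W5.

Theorem mainTheorem11 (d : Order.disp_t) (A : finOrderType d)
  (u v : word A) (alpha : lorder) :
  is_word u -> is_word v -> prime_word u -> prime_word v ->
  lex_lt u v ->
  is_ord alpha ->
  lex_lt (wcat (wpow u alpha) v) v ->
  forall beta : lorder, is_ord beta -> inhabited (car beta) ->
  prime_word (wcat (wpow u alpha) (wpow v beta)).
Proof.
  intros Hu Hv Pu Pv Luv Ha Lw beta Hb Ib.
  exact (main_sec u v alpha Hu Hv Pu Pv Luv Ha Lw beta Hb Ib).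
Qed.
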